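(* Let $\mathcal K$ be a tame topological Kuranishi atlas. Then $|\mathcal K|$ and $|\mathbf E_{\mathcal K}|$ (with their quotient topologies) are Hausdorff, and for each $I\in\mathcal I_{\mathcal K}$ the maps $\pi_{\mathcal K}|_{U_I}:U_I\to|\mathcal K|$ and $\pi_{\mathbf E_{\mathcal K}}|_{\mathbb E_I}:\mathbb E_I\to|\mathbf E_{\mathcal K}|$ are homeomorphisms onto their images.
   Context: $X$ is a compact metrizable space. Charts: a topological Kuranishi chart for $X$ with open footprint $F\subset X$ is a tuple $\mathbf K=(U,\mathbb E,\mathfrak s,\psi)$ where $U$ is a separable, locally compact, metrizable space; $\mathbb E$ is a separable, locally compact, metrizable space with continuous maps $\mathrm{pr}:\mathbb E\to U$ and $0:U\to\mathbb E$ with $\mathrm{pr}\circ0=\mathrm{id}_U$; $\mathfrak s:U\to\mathbb E$ is continuous with $\mathrm{pr}\circ\mathfrak s=\mathrm{id}_U$; and $\psi$ is a homeomorphism from $\mathfrak s^{-1}(0):=\{x\in U:\mathfrak s(x)=0(x)\}$ onto $F$. Coordinate changes: for charts $\mathbf K_I,\mathbf K_J$ with $F_I\cap F_J\neq\emptyset$, a coordinate change $\widehat\Phi_{IJ}:\mathbf K_I\to\mathbf K_J$ consists of an open set $U_{IJ}\subset U_I$ with $U_{IJ}\cap\mathfrak s_I^{-1}(0_I)=\psi_I^{-1}(F_I\cap F_J)$ and a topological embedding $\widehat\Phi_{IJ}:\mathrm{pr}_I^{-1}(U_{IJ})\to\mathbb E_J$ such that there is a topological embedding $\phi_{IJ}:U_{IJ}\to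 U_J$ with $\mathrm{pr}_J\circ\widehat\Phi_{IJ}=\phi_{IJ}\circ\mathrm{pr}_I$, $0_J\circ\phi_{IJ}=\widehat\Phi_{IJ}\circ0_I$ and $\mathfrak s_J\circ\phi_{IJ}=\widehat\Phi_{IJ}\circ\mathfrak s_I$ on $U_{IJ}$, and $\phi_{IJ}=\psi_J^{-1}\circ\psi_I$ on $U_{IJ}\cap\mathfrak s_I^{-1}(0_I)$. Atlases: a covering family of basic charts is a finite family $(\mathbf K_i)_{i=1,\dots,N}$ of charts whose footprints cover $X$; $\mathcal I_{\mathcal K}$ is the set of nonempty $I\subset\{1,\dots,N\}$ with $F_I:=\bigcap_{i\in I}F_i\neq\emptyset$. Transition data consist of a chart $\mathbf K_J$ with footprint $F_J$ for each $J\in\mathcal I_{\mathcal K}$ with $|J|\ge2$ (and $\mathbf K_{\{i\}}:=\mathbf K_i$), and a coordinate change $\widehat\Phi_{IJ}:\mathbf K_I\to\mathbf K_J$ for all $I\subsetneq J$ in $\mathcal I_{\mathcal K}$. We set $U_{II}:=U_I$, $\phi_{II}:=\mathrm{id}_{U_I}$. For $I\subsetneq J\subsetneq K$ let $U_{IJK}:=U_{IJ}\cap\phi_{IJ}^{-1}(U_{JK})$. The triple satisfies the weak cocycle condition if $\widehat\Phi_{JK}\circ\widehat\Phi_{IJ}=\widehat\Phi_{IK}$ on $\mathrm{pr}_I^{-1}(U_{IJK}\cap U_{IK})$; the cocycle condition if in addition $U_{IJK}\subset U_{IK}$; the strong cocycle condition if in addition $U_{IJK}=U_{IK}$. A weak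 topological Kuranishi atlas $\mathcal K$ is a covering family with transition data satisfying the weak cocycle condition for all such triples; a topological Kuranishi atlas is one satisfying the cocycle condition for all triples. Filtrations: a weak topological Kuranishi atlas is filtered if it is equipped with closed subsets $\mathbb E_{IJ}\subset\mathbb E_J$ for all $J\in\mathcal I_{\mathcal K}$ and $I\subset J$ (including $I=\emptyset$) such that (i) $\mathbb E_{JJ}=\mathbb E_J$ and $\mathbb E_{\emptyset J}=\mathrm{im}\,0_J$; (ii) $\widehat\Phi_{JK}(\mathrm{pr}_J^{-1}(U_{JK})\cap\mathbb E_{IJ})=\mathbb E_{IK}\cap\mathrm{pr}_K^{-1}(\mathrm{im}\,\phi_{JK})$ for $I\subset J\subsetneq K$; (iii) $\mathbb E_{IJ}\cap\mathbb E_{HJ}=\mathbb E_{(I\cap H)J}$ for $I,H\subset J$; (iv) $\mathrm{im}\,\phi_{IJ}$ is an open subset of $\mathfrak s_J^{-1}(\mathbb E_{IJ})$ for $I\subsetneq J$. Tameness: a filtered weak topological Kuranishi atlas is tame if $U_{IJ}\cap U_{IK}=U_{I(J\cup K)}$ for all $I,J,K\in\mathcal I_{\mathcal K}$ with $I\subset J,K$ (where $U_{IL}:=\emptyset$ if $L\notin\mathcal I_{\mathcal K}$), and $\phi_{IJ}(U_{IK})=U_{JK}\cap\mathfrak s_J^{-1}(\mathbb E_{IJ})$ for all $I\subset J\subset K$ in $\mathcal I_{\mathcal K}$ (equalities of indices allowed). Virtual neighbourhood: for a topological Kuranishi atlas, $|\mathcal K|$ is the quotient of $\bigsqcup_{I\in\mathcal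 I_{\mathcal K}}U_I=\{(I,x):x\in U_I\}$ by the equivalence relation generated by $(I,x)\sim(J,\phi_{IJ}(x))$ for $I\subset J$, $x\in U_{IJ}$, with the quotient topology and projection $\pi_{\mathcal K}$; similarly $|\mathbf E_{\mathcal K}|$ is the quotient of $\bigsqcup_I\mathbb E_I$ by the relation generated by $(I,e)\sim(J,\widehat\Phi_{IJ}(e))$ for $e\in\mathrm{pr}_I^{-1}(U_{IJ})$, with projection $\pi_{\mathbf E_{\mathcal K}}$. *)

(* Defs.v *)
From HB Require Import structures.
From mathcomp Require Import all_boot.
From Stdlib Require Import Rdefinitions Relations FunctionalExtensionality PropExtensionality.
Set Implicit Arguments.
Unset Strict Implicit.
Unset Printing Implicit Defensive.

Record Top := mkTop {
  car :> Type;
  open : (car -> Prop) -> Prop;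
  open_setT : open (fun _ => True);
  open_setI : forall A B, open A -> open B -> open (fun x => A x /\ B x);
  open_bigU : forall (F : (car -> Prop) -> Prop),
      (forall A, F A -> open A) -> open (fun x => exists A, F A /\ A x)
}.
Arguments open {t} _.

Definition closed {T : Top} (A : T -> Prop) : Prop := open (fun x => ~ A x).

Definition continuous {S T : Top} (f : S -> T) : Prop :=
  forall V : T -> Prop, open V -> open (fun x => V (f x)).

Definition hausdorff (T : Top) : Prop :=
  forall x y : T, x <> y -> exists V W : T -> Prop,
    open V /\ open W /\ V x /\ W y /\ forall z, ~ (V z /\ W z).

Definition homeomorphism {S T : Top} (f : S -> T) : Prop :=
  exists g : T -> S, (forall x, g (f x) = x) /\ (forall y, f (g y) = y) /\
    continuous f /\ continuous g.

Definition compact_set {T : Top} (K : T -> Prop) : Prop :=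
  forall F : (T -> Prop) -> Prop, (forall A, F A -> open A) ->
    (forall x, K x -> exists A, F A /\ A x) ->
    exists l : list (T -> Prop), (forall A, List.In A l -> F A) /\
      (forall x, K x -> exists A, List.In A l /\ A x).

Definition compact_space (T : Top) : Prop := compact_set (fun _ : T => True).

Definition locally_compact (T : Top) : Prop :=
  forall x : T, exists V K : T -> Prop, open V /\ V x /\
    (forall y, V y -> K y) /\ compact_set K.

Definition countable_set {T : Type} (D : T -> Prop) : Prop :=
  exists f : {x | D x} -> nat, injective f.

Definition separable (T : Top) : Prop :=
  exists D : T -> Prop, countable_set D /\
    forall V : T -> Prop, open V -> (exists x, V x) -> exists x, D x /\ V x.

Definition is_metric {T : Type} (d : T -> T -> R) : Prop :=
  (forall x y, Rle R0 (d x y)) /\ (forall x y, d x y = R0 <-> x = y) /\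
  (forall x y, d x y = d y x) /\
  (forall x y z, Rle (d x z) (Rplus (d x y) (d y z))).

Definition metrizable (T : Top) : Prop :=
  exists d : T -> T -> R, is_metric d /\
    forall V : T -> Prop, open V <->
      (forall x, V x -> exists eps, Rlt R0 eps /\
                 forall y, Rlt (d x y) eps -> V y).

Section Subspace.
Variables (T : Top) (P : T -> Prop).
Definition sub_open (V : {x | P x} -> Prop) : Prop :=
  exists W : T -> Prop, open W /\ forall x, V x <-> W (proj1_sig x).
Lemma sub_open_setT : sub_open (fun _ => True).
Proof. exists (fun _ => True); split; [exact: open_setT | by []]. Qed.
Lemma sub_open_setI A B : sub_open A -> sub_open B ->
  sub_open (fun x => A x /\ B x).
Proof.
move=> [WA [oA hA]] [WB [oB hB]]; exists (fun x => WA x /\ WB x).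
split; first exact: open_setI.
by move=> x; rewrite hA hB.
Qed.
Lemma sub_open_bigU (F : ({x | P x} -> Prop) -> Prop) :
  (forall A, F A -> sub_open A) -> sub_open (fun x => exists A, F A /\ A x).
Proof.
move=> hF.
exists (fun y => exists W, (open W /\ exists A, F A /\ forall x, A x <-> W (proj1_sig x)) /\ W y).
split.
  apply: (open_bigU (F := fun W => open W /\ exists A, F A /\ forall x, A x <-> W (proj1_sig x))).
  by move=> W [].
move=> x; split.
  move=> [A [FA Ax]]; have [W [oW hW]] := hF A FA.
  exists W; split; last by rewrite -hW.
  by split=> //; exists A.
move=> [W [[oW [A [FA hA]]] Wx]]; exists A; split=> //; by rewrite hA.
Qed.
Definition subspace : Top :=
  @mkTop {x | P x} sub_open sub_open_setT sub_open_setI sub_open_bigU.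
End Subspace.

Definition image_of {S T : Top} (f : S -> T) : T -> Prop :=
  fun y => exists x, f x = y.
Definition corestr {S T : Top} (f : S -> T) : S -> subspace (image_of f) :=
  fun x => exist _ (f x) (ex_intro _ x erefl).
Definition embedding {S T : Top} (f : S -> T) : Prop :=
  homeomorphism (corestr f).
Definition embedding_on {S T : Top} (f : S -> T) (P : S -> Prop) : Prop :=
  @embedding (subspace P) T (fun x => f (proj1_sig x)).

Section SumSpace.
Variables (Ix : Type) (T : Ix -> Top).
Definition sum_open (V : {i : Ix & T i} -> Prop) : Prop :=
  forall i, open (fun x : T i => V (existT _ i x)).
Lemma sum_open_setT : sum_open (fun _ => True).
Proof. by move=> i; exact: open_setT. Qed.
Lemma sum_open_setI A B : sum_open A -> sum_open B ->
  sum_open (fun x => A x /\ B x).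
Proof. by move=> hA hB i; apply: open_setI. Qed.
Lemma sum_open_bigU (F : ({i : Ix & T i} -> Prop) -> Prop) :
  (forall A, F A -> sum_open A) -> sum_open (fun x => exists A, F A /\ A x).
Proof.
move=> hF i.
have := @open_bigU (T i) (fun W => exists A, F A /\ W = (fun x => A (existT _ i x))).
move=> h.
have -> : (fun x : T i => exists A, F A /\ A (existT _ i x)) =
  (fun x => exists W, (exists A, F A /\ W = (fun x => A (existT _ i x))) /\ W x).
  apply: FunctionalExtensionality.functional_extensionality=> x.
  apply: PropExtensionality.propositional_extensionality; split.
    by move=> [A [FA Ax]]; exists (fun x => A (existT _ i x)); split=> //; exists A.
  by move=> [W [[A [FA ->]] Wx]]; exists A.
by apply: h => W [A [FA ->]]; apply: hF.
Qed.
Definition sum_space : Top :=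
  @mkTop {i : Ix & T i} sum_open sum_open_setT sum_open_setI sum_open_bigU.
End SumSpace.

Section Quotient.
Variables (T : Top) (Rel : T -> T -> Prop).
Definition gen_equiv : T -> T -> Prop := clos_refl_sym_trans T Rel.
Definition quot_type : Type :=
  {P : T -> Prop | exists x, P = gen_equiv x}.
Definition quot_proj (x : T) : quot_type :=
  exist _ (gen_equiv x) (ex_intro _ x erefl).
Definition quot_open (V : quot_type -> Prop) : Prop :=
  open (fun x => V (quot_proj x)).
Lemma quot_open_setT : quot_open (fun _ => True).
Proof. exact: open_setT. Qed.
Lemma quot_open_setI A B : quot_open A -> quot_open B ->
  quot_open (fun x => A x /\ B x).
Proof. by move=> hA hB; apply: open_setI. Qed.
Lemma quot_open_bigU (F : (quot_type -> Prop) -> Prop) :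
  (forall A, F A -> quot_open A) -> quot_open (fun x => exists A, F A /\ A x).
Proof.
move=> hF; rewrite /quot_open.
have -> : (fun x => exists A, F A /\ A (quot_proj x)) =
  (fun x => exists W, (exists A, F A /\ W = (fun y => A (quot_proj y))) /\ W x).
  apply: FunctionalExtensionality.functional_extensionality=> x.
  apply: PropExtensionality.propositional_extensionality; split.
    by move=> [A [FA Ax]]; exists (fun y => A (quot_proj y)); split=> //; exists A.
  by move=> [W [[A [FA ->]] Wx]]; exists A.
by apply: open_bigU => W [A [FA ->]]; apply: hF.
Qed.
Definition quot_space : Top :=
  @mkTop quot_type quot_open quot_open_setT quot_open_setI quot_open_bigU.
End Quotient.

(* The
   chart K_I, the sets U_IJ, the maps Phihat_IJ, phi_IJ and the
   filtration E_IJ are given for all index sets; only those with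
   I, J in I_K (and I strictly contained in J for coordinate changes)
   are constrained / used. *)
Record KData (X : Top) (N : nat) := {
  Fp : 'I_N -> X -> Prop;
  U : {set 'I_N} -> Top;
  E : {set 'I_N} -> Top;
  pr : forall I : {set 'I_N}, E I -> U I;
  zr : forall I : {set 'I_N}, U I -> E I;
  sc : forall I : {set 'I_N}, U I -> E I;
  psi : forall I : {set 'I_N}, U I -> X;
  UU : forall I J : {set 'I_N}, U I -> Prop;
  Phi : forall I J : {set 'I_N}, E I -> E J;
  phi : forall I J : {set 'I_N}, U I -> U J;
  EF : forall I J : {set 'I_N}, E J -> Prop
}.

Arguments Fp {X N} _ _ _.
Arguments U {X N} _ _.
Arguments E {X N} _ _.
Arguments pr {X N} _ {I} _.
Arguments zr {X N} _ {I} _.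
Arguments sc {X N} _ {I} _.
Arguments psi {X N} _ {I} _.
Arguments UU {X N} _ I J _.
Arguments Phi {X N} _ I J _.
Arguments phi {X N} _ I J _.
Arguments EF {X N} _ I J _.

Section Atlas.
Variables (X : Top) (N : nat) (K : KData X N).

Definition FI (I : {set 'I_N}) (x : X) : Prop := forall i, i \in I -> Fp K i x.
Definition IK (I : {set 'I_N}) : Prop := I != set0 /\ exists x, FI I x.
Definition Z {I} (x : U K I) : Prop := sc K x = zr K x.

Definition chart_ok (I : {set 'I_N}) : Prop :=
  separable (U K I) /\ locally_compact (U K I) /\ metrizable (U K I) /\
  separable (E K I) /\ locally_compact (E K I) /\ metrizable (E K I) /\
  continuous (pr K (I:=I)) /\ continuous (zr K (I:=I)) /\
  continuous (sc K (I:=I)) /\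
  (forall x : U K I, pr K (zr K x) = x) /\
  (forall x : U K I, pr K (sc K x) = x) /\
  embedding_on (psi K (I:=I)) (@Z I) /\
  (forall y, FI I y <-> exists x : U K I, Z x /\ psi K x = y).

Definition coord_change_ok (I J : {set 'I_N}) : Prop :=
  open (UU K I J) /\
  (forall x, UU K I J x /\ Z x <-> Z x /\ FI I (psi K x) /\ FI J (psi K x)) /\
  embedding_on (Phi K I J) (fun e => UU K I J (pr K e)) /\
  embedding_on (phi K I J) (UU K I J) /\
  (forall e, UU K I J (pr K e) -> pr K (Phi K I J e) = phi K I J (pr K e)) /\
  (forall x, UU K I J x -> zr K (phi K I J x) = Phi K I J (zr K x)) /\
  (forall x, UU K I J x -> sc K (phi K I J x) = Phi K I J (sc K x)) /\
  (* phi_IJ = psi_J^{-1} o psi_I on U_IJ cap s_I^{-1}(0_I) *)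
  (forall x, UU K I J x -> Z x -> Z (phi K I J x) /\ psi K (phi K I J x) = psi K x).

Definition UIJK (I J L : {set 'I_N}) (x : U K I) : Prop :=
  UU K I J x /\ UU K J L (phi K I J x).

Definition cocycle_ok (I J L : {set 'I_N}) : Prop :=
  (forall e, UIJK J L (pr K e) /\ UU K I L (pr K e) ->
     Phi K J L (Phi K I J e) = Phi K I L e) /\
  (forall x, UIJK J L x -> UU K I L x).

Definition top_atlas : Prop :=
  (forall i, open (Fp K i)) /\
  (forall x, exists i, Fp K i x) /\
  (forall I, IK I -> chart_ok I) /\
  (forall I J, IK I -> IK J -> I \proper J -> coord_change_ok I J) /\
  (forall I J L, IK I -> IK J -> IK L -> I \proper J -> J \proper L ->
     cocycle_ok I J L).

Definition filtered : Prop :=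
  (forall I J : {set 'I_N}, IK J -> I \subset J -> closed (EF K I J)) /\
  (forall J, IK J -> forall e, EF K J J e) /\
  (forall J, IK J -> forall e, EF K set0 J e <-> exists x, e = zr K x) /\
  (forall I J L : {set 'I_N}, IK J -> IK L -> I \subset J -> J \proper L ->
     forall f : E K L,
       (exists e, UU K J L (pr K e) /\ EF K I J e /\ Phi K J L e = f) <->
       (EF K I L f /\ exists x, UU K J L x /\ phi K J L x = pr K f)) /\
  (forall I H J : {set 'I_N}, IK J -> I \subset J -> H \subset J ->
     forall e, EF K I J e /\ EF K H J e <-> EF K (I :&: H) J e) /\
  (forall I J, IK I -> IK J -> I \proper J ->
     (forall x, UU K I J x -> EF K I J (sc K (phi K I J x))) /\
     exists W : U K J -> Prop, open W /\
       forall y, (exists x, UU K I J x /\ phi K I J x = y) <->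
                 (W y /\ EF K I J (sc K y))).

(* U_IL extended with U_II := U_I and U_IL := empty for L not in I_K *)
Definition Uext (I L : {set 'I_N}) (x : U K I) : Prop :=
  IK L /\ (if I == L then True else UU K I L x).

Definition tame : Prop :=
  (forall I J L, IK I -> IK J -> IK L -> I \subset J -> I \subset L ->
     forall x : U K I, Uext J x /\ Uext L x <-> Uext (J :|: L) x) /\
  (* phi_IJ(U_IK) = U_JK cap s_J^{-1}(E_IJ); the case I = J is trivial
     since phi_II = id and E_II = E_I *)
  (forall I J L, IK I -> IK J -> IK L -> I \proper J -> J \subset L ->
     forall y : U K J,
       (exists x, Uext L x /\ UU K I J x /\ phi K I J x = y) <->
       (Uext L y /\ EF K I J (sc K y))).

Definition tame_top_atlas : Prop := top_atlas /\ filtered /\ tame.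

Definition IKtype := {I : {set 'I_N} | IK I}.

Definition Kdisj : Top := sum_space (fun I : IKtype => U K (proj1_sig I)).
Definition Krel (a b : Kdisj) : Prop :=
  proj1_sig (projT1 a) \proper proj1_sig (projT1 b) /\
  UU K _ (proj1_sig (projT1 b)) (projT2 a) /\
  projT2 b = phi K _ _ (projT2 a).
Definition Kquot : Top := quot_space Krel.
Definition pi_K : Kdisj -> Kquot := quot_proj Krel.

Definition Edisj : Top := sum_space (fun I : IKtype => E K (proj1_sig I)).
Definition Erel (a b : Edisj) : Prop :=
  proj1_sig (projT1 a) \proper proj1_sig (projT1 b) /\
  UU K _ (proj1_sig (projT1 b)) (pr K (projT2 a)) /\
  projT2 b = Phi K _ _ (projT2 a).
Definition Equot : Top := quot_space Erel.
Definition pi_E : Edisj -> Equot := quot_proj Erel.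

End Atlas.

(* Main.v *)
From Stdlib Require Import Reals Lra Relations FunctionalExtensionality PropExtensionality ProofIrrelevance ClassicalEpsilon Classical Eqdep.
From mathcomp Require Import all_boot.
Require Import Defs.
Set Implicit Arguments.
Unset Strict Implicit.
Unset Printing Implicit Defensive.

Lemma open_ext (T : Top) (A B : T -> Prop) :
  (forall x, A x <-> B x) -> open A -> open B.
Proof.
move=> h; have -> : B = A; last by [].
apply: functional_extensionality=> x; apply: propositional_extensionality.
by split=> /h.
Qed.

Lemma closed_ext (T : Top) (A B : T -> Prop) :
  (forall x, A x <-> B x) -> closed A -> closed B.
Proof.
move=> h; apply: open_ext => x; split=> hn hb; apply: hn; by apply/h.
Qed.

Lemma open_local (T : Top) (A : T -> Prop) :
  (forall x, A x -> exists V, open V /\ V x /\ forall y, V y -> A y) -> open A.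
Proof.
move=> h.
apply: (@open_ext T (fun x => exists V, (open V /\ forall y, V y -> A y) /\ V x)).
  move=> x; split.
    by move=> [V [[_ hV] Vx]]; apply: hV.
  by move=> /h [V [oV [Vx hV]]]; exists V.
by apply: open_bigU => V [].
Qed.

Lemma open_empty (T : Top) : open (fun _ : T => False).
Proof. by apply: open_local => x. Qed.

Lemma closed_empty (T : Top) : closed (fun _ : T => False).
Proof. apply: (@open_ext T (fun _ => True)); [by move=> x; tauto | exact: open_setT]. Qed.

Lemma closed_all (T : Top) : closed (fun _ : T => True).
Proof. apply: (@open_ext T (fun _ => False)); [by move=> x; tauto | exact: open_empty]. Qed.

Lemma closed_setU (T : Top) (A B : T -> Prop) :
  closed A -> closed B -> closed (fun x => A x \/ B x).
Proof.
move=> hA hB; apply: (@open_ext T (fun x => ~ A x /\ ~ B x)); last exact: open_setI.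
by move=> x; split; [move=> [h1 h2] [] | move=> h; split=> h'; apply: h; [left|right]].
Qed.

Lemma closed_setI (T : Top) (A B : T -> Prop) :
  closed A -> closed B -> closed (fun x => A x /\ B x).
Proof.
move=> hA hB; apply: open_local => x hx.
have [nA|nA] := classic (A x).
  have nB : ~ B x by move=> bx; apply: hx.
  exists (fun x => ~ B x); split; first exact: hB.
  split=> // y hy [_ by']; exact: hy.
exists (fun x => ~ A x); split; first exact: hA.
split=> // y hy [ay _]; exact: hy.
Qed.

Lemma closed_preimage (S T : Top) (g : S -> T) (A : T -> Prop) :
  continuous g -> closed A -> closed (fun x => A (g x)).
Proof. by move=> hg hA; apply: (hg (fun y => ~ A y)). Qed.

Lemma closed_fin_union (T : Top) (I : finType) (F : I -> T -> Prop) :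
  (forall i, closed (F i)) -> closed (fun x => exists i, F i x).
Proof.
move=> hF.
have H : forall s : seq I, closed (fun x => exists i, i \in s /\ F i x).
  elim=> [|i s IH].
    apply: (closed_ext (A := fun _ => False)); last exact: closed_empty.
    by move=> x; split=> // [[i []]].
  apply: (closed_ext (A := fun x => F i x \/ exists j, j \in s /\ F j x)).
    move=> x; split.
      by case=> [h|[j [js h]]]; [exists i; rewrite inE eqxx | exists j; rewrite inE js orbT].
    move=> [j]; rewrite inE => -[/orP [/eqP ->|js] h]; [left|right; exists j] => //.
  exact: closed_setU.
apply: (closed_ext (A := fun x => exists i, i \in index_enum I /\ F i x)) (H _).
move=> x; split; first by move=> [i [_ h]]; exists i.
by move=> [i h]; exists i; rewrite mem_index_enum.
Qed.

Lemma open_fin_inter (T : Top) (I : finType) (F : I -> T -> Prop) (s : seq I) :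
  (forall i, open (F i)) -> open (fun x => forall i, i \in s -> F i x).
Proof.
move=> hF; elim: s => [|i s IH].
  by apply: (open_ext (A := fun _ => True)); [move=> x; split | exact: open_setT].
apply: (open_ext (A := fun x => F i x /\ forall j, j \in s -> F j x)); last first.
  exact: open_setI.
move=> x; split.
  by move=> [h1 h2] j; rewrite inE => /orP [/eqP ->|]; [|apply: h2].
by move=> h; split=> [|j js]; apply: h; rewrite inE ?eqxx ?js ?orbT.
Qed.

Section Metric.
Variables (T : Top) (d : T -> T -> R).
Hypothesis (hd : is_metric d).
Hypothesis (hop : forall V : T -> Prop, open V <->
      (forall x, V x -> exists eps, Rlt R0 eps /\ forall y, Rlt (d x y) eps -> V y)).

Lemma d_refl x : d x x = R0.
Proof. by case: hd => _ [h _]; apply/h. Qed.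
Lemma d_sym x y : d x y = d y x.
Proof. by case: hd => _ [_ [h _]]. Qed.
Lemma d_tri x y z : Rle (d x z) (Rplus (d x y) (d y z)).
Proof. by case: hd => _ [_ [_ h]]. Qed.
Lemma d_pos x y : x <> y -> Rlt R0 (d x y).
Proof.
case: hd => h0 [h1 _] nxy.
have := h0 x y; case/Rle_lt_or_eq_dec => // e.
by case: nxy; apply/h1.
Qed.

Lemma ball_open x r : open (fun y => Rlt (d x y) r).
Proof.
apply/hop => y hy; exists (Rminus r (d x y)); split; first lra.
move=> z hz; have := d_tri x y z; lra.
Qed.

Lemma closed_avoid (A : T -> Prop) x : closed A -> ~ A x ->
  exists r, Rlt R0 r /\ forall y, Rlt (d x y) r -> ~ A y.
Proof. by move=> /hop h nx; apply: h. Qed.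

Lemma metric_hausdorff : hausdorff T.
Proof.
move=> x y nxy; have hp := d_pos nxy.
exists (fun z => Rlt (d x z) (Rdiv (d x y) 2)), (fun z => Rlt (d y z) (Rdiv (d x y) 2)).
do 2 (split; first exact: ball_open).
split; first by rewrite d_refl; lra.
split; first by rewrite d_refl; lra.
move=> z [h1 h2]; have := d_tri x z y; rewrite (d_sym z y); lra.
Qed.

Lemma closed_le1 (A : T -> Prop) : (forall y y', A y -> A y' -> y = y') -> closed A.
Proof.
move=> h1; apply/hop => x nx.
have [[a Aa]|nA] := classic (exists a, A a).
  have nxa : x <> a by move=> e; apply: nx; rewrite e.
  exists (d x a); split; first exact: d_pos.
  by move=> y hy Ay; rewrite (h1 _ _ Ay Aa) in hy; lra.
exists R1; split; first lra.
by move=> y _ Ay; apply: nA; exists y.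
Qed.

Lemma ball_sep (S S' A A' : T -> Prop) : closed A -> closed A' ->
  (forall y, S y -> ~ A y) -> (forall y, S' y -> ~ A' y) ->
  (forall y, S y -> A' y) -> (forall y, S' y -> A y) ->
  exists V V' : T -> Prop, open V /\ open V' /\ (forall y, S y -> V y) /\
    (forall y, S' y -> V' y) /\ (forall y, V y -> ~ A y) /\
    (forall y, V' y -> ~ A' y) /\ (forall y, ~ (V y /\ V' y)).
Proof.
move=> cA cA' hSA hSA' hSA'' hSA2.
pose V (S A : T -> Prop) y := exists s r, S s /\ Rlt R0 r /\
  (forall z, Rlt (d s z) r -> ~ A z) /\ Rlt (d s y) (Rdiv r 2).
have Vopen : forall S A, open (V S A).
  move=> S0 A0; apply/hop => y [s [r [Ss [rp [hr hy]]]]].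
  exists (Rminus (Rdiv r 2) (d s y)); split; first lra.
  move=> z hz; exists s, r; do 3 (split=> //).
  have := d_tri s y z; lra.
have VS : forall S A, closed A -> (forall y, S y -> ~ A y) -> forall y, S y -> V S A y.
  move=> S0 A0 cA0 h y Sy; have [r [rp hr]] := closed_avoid cA0 (h _ Sy).
  by exists y, r; do 3 (split=> //); rewrite d_refl; lra.
have VA : forall S A y, V S A y -> ~ A y.
  move=> S0 A0 y [s [r [_ [rp [hr hy]]]]]; apply: hr; lra.
exists (V S A), (V S' A'); do 2 (split; first exact: Vopen).
split; first exact: VS.
split; first exact: VS.
split; first exact: VA.
split; first exact: VA.
move=> y [[s [r [Ss [rp [hr hy]]]]] [s' [r' [Ss' [rp' [hr' hy']]]]]].
have ht := d_tri s y s'; rewrite (d_sym y s') in ht.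
have [le|lt] := Rle_lt_dec r' r.
  by apply: (hr s') ; [lra | apply: hSA2].
apply: (hr' s); last by apply: hSA''.
by rewrite d_sym; lra.
Qed.
End Metric.

Lemma metrizable_hausdorff (T : Top) : metrizable T -> hausdorff T.
Proof. by move=> [d [hd hop]]; exact: (metric_hausdorff hd hop). Qed.

Lemma closed_eq (S T : Top) (g h : S -> T) : hausdorff T -> continuous g -> continuous h ->
  closed (fun x => g x = h x).
Proof.
move=> hT cg ch; apply: open_local => x nx.
have [V [W' [oV [oW [Vx [Wx dVW]]]]]] := hT _ _ nx.
exists (fun z => V (g z) /\ W' (h z)); split; first by apply: open_setI; [apply: cg|apply: ch].
split=> // z [h1 h2] e; apply: (dVW (g z)); split=> //; by rewrite e.
Qed.

Lemma emb_inj (S T : Top) (g : S -> T) (P : S -> Prop) : embedding_on g P ->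
  forall x y, P x -> P y -> g x = g y -> x = y.
Proof.
move=> [k [hk _]] x y px py e.
have : corestr (fun x0 : subspace P => g (proj1_sig x0)) (exist P x px) =
       corestr (fun x0 : subspace P => g (proj1_sig x0)) (exist P y py).
  apply: eq_sig_hprop => /=; [move=> ? ? ?; apply: proof_irrelevance | exact: e].
by move=> /(f_equal k); rewrite !hk => -[].
Qed.

Lemma emb_cont (S T : Top) (g : S -> T) (P : S -> Prop) : embedding_on g P ->
  forall V : T -> Prop, open V -> exists O : S -> Prop, open O /\
    forall x, P x -> (O x <-> V (g x)).
Proof.
move=> [k [_ [_ [cg _]]]] V oV.
have := cg (fun y => V (proj1_sig y)).
case; first by exists V; split.
move=> O [oO hO]; exists O; split=> // x px.
by have := hO (exist P x px); rewrite /=; move=> h; split=> /h.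
Qed.

Lemma emb_open (S T : Top) (g : S -> T) (P : S -> Prop) : embedding_on g P ->
  forall O : S -> Prop, open O -> exists V : T -> Prop, open V /\
    forall x, P x -> (V (g x) <-> O x).
Proof.
move=> [k [hk [_ [_ ck]]]] O oO.
have := ck (fun y => O (proj1_sig y)).
case; first by exists O; split.
move=> V [oV hV]; exists V; split=> // x px.
have := hV (corestr (fun x0 : subspace P => g (proj1_sig x0)) (exist P x px)).
rewrite hk /=; move=> h; by split=> /h.
Qed.

Lemma closed_compl (T : Top) (O : T -> Prop) : open O -> closed (fun y => ~ O y).
Proof. by move=> oO; apply: (open_ext (A := O)) => // x; split=> [h []|/NNPP]. Qed.

Lemma cont_comp (S T U0 : Top) (g : S -> T) (h : T -> U0) :
  continuous g -> continuous h -> continuous (fun x => h (g x)).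
Proof. by move=> cg ch V oV; exact: (cg _ (ch _ oV)). Qed.

Lemma cont_id (S : Top) : continuous (fun x : S => x).
Proof. by move=> V oV. Qed.

Section QuotLemmas.
Variables (T : Top) (Rel : T -> T -> Prop).

Lemma qproj_surj (p : quot_space Rel) : exists a, p = quot_proj Rel a.
Proof.
case: p => S [a e]; exists a; subst S.
by apply: eq_sig_hprop => //= ? ? ?; apply: proof_irrelevance.
Qed.

Lemma qproj_eq a b : quot_proj Rel a = quot_proj Rel b <-> gen_equiv Rel a b.
Proof.
split.
  move=> /(f_equal (@proj1_sig _ _)) /= e.
  rewrite e; exact: rst_refl.
move=> h; apply: eq_sig_hprop => /=; first by move=> ? ? ?; apply: proof_irrelevance.
apply: functional_extensionality => c; apply: propositional_extensionality; split=> h'.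
  by apply: rst_trans (rst_sym _ _ _ _ h) h'.
exact: rst_trans h h'.
Qed.

Lemma sat_equiv (V : T -> Prop) : (forall a b, Rel a b -> (V a <-> V b)) ->
  forall a b, gen_equiv Rel a b -> (V a <-> V b).
Proof.
move=> h; apply: clos_refl_sym_trans_ind => //.
- by move=> x y _ e; split=> /e.
- by move=> x y z _ e1 _ e2; split=> [/e1/e2|/e2/e1].
Qed.

Lemma sat_open (V : T -> Prop) : open V -> (forall a b, Rel a b -> (V a <-> V b)) ->
  open (fun p : quot_space Rel => exists a, p = quot_proj Rel a /\ V a) /\
  forall b, (exists a, quot_proj Rel b = quot_proj Rel a /\ V a) <-> V b.
Proof.
move=> oV hV.
have key : forall b, (exists a, quot_proj Rel b = quot_proj Rel a /\ V a) <-> V b.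
  move=> b; split; last by move=> vb; exists b.
  move=> [a [/qproj_eq e va]]; exact/(sat_equiv hV e).
split=> //.
by apply: (open_ext (A := V)) => // b; rewrite key.
Qed.
End QuotLemmas.

Section Abstract.
Local Unset Implicit Arguments.
Variable N : nat.
Local Notation Idx := {set 'I_N}.
Variable P : Idx -> Prop.
Variable W : Idx -> Top.
Variable D : forall L L' : Idx, W L -> Prop.
Variable phi : forall L L' : Idx, W L -> W L'.

Local Set Implicit Arguments.
Definition PT := {L : Idx | P L}.
Definition Sdisj : Top := sum_space (fun i : PT => W (proj1_sig i)).
Definition Srel (a b : Sdisj) : Prop :=
  proj1_sig (projT1 a) \proper proj1_sig (projT1 b) /\
  D _ (proj1_sig (projT1 b)) (projT2 a) /\
  projT2 b = phi _ _ (projT2 a).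
Definition Squot : Top := quot_space Srel.
Definition spi : Sdisj -> Squot := quot_proj Srel.
Definition mk L (hL : P L) (x : W L) : Sdisj :=
  existT (fun i : PT => W (proj1_sig i)) (exist P L hL) x.

Local Unset Implicit Arguments.
Variable Z : forall L, W L -> Prop.
Variable Y : Top.
Variable f : forall L, W L -> Y.

Hypothesis HPne : forall L, P L -> L != set0.
Hypothesis Hmet : forall L, P L -> metrizable (W L).
Hypothesis HDopen : forall L L', P L -> P L' -> L \proper L' -> open (D L L').
Hypothesis Hemb : forall L L', P L -> P L' -> L \proper L' ->
  embedding_on (phi L L') (D L L').
Hypothesis HCclosed : forall L L', P L -> P L' -> L \proper L' ->
  closed (fun y : W L' => exists x, D L L' x /\ phi L L' x = y).
Hypothesis Hcoc : forall L0 L1 L2, P L0 -> P L1 -> P L2 ->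
  L0 \proper L1 -> L1 \proper L2 -> forall x, D L0 L1 x -> D L1 L2 (phi L0 L1 x) ->
  D L0 L2 x /\ phi L1 L2 (phi L0 L1 x) = phi L0 L2 x.
Hypothesis Htame1 : forall L L1 L2, P L -> P L1 -> P L2 ->
  L \proper L1 -> L \proper L2 -> forall x, D L L1 x -> D L L2 x ->
  P (L1 :|: L2) /\ D L (L1 :|: L2) x.
Hypothesis Htame2 : forall L L1 M, P L -> P L1 -> P M ->
  L \proper L1 -> L1 \proper M -> forall x, D L L1 x -> D L M x -> D L1 M (phi L L1 x).
Hypothesis Hdown : forall L L1 M, P L -> P L1 -> P M ->
  L \proper L1 -> L1 \proper M -> forall y a, D L M y -> D L1 M a ->
  phi L M y = phi L1 M a -> D L L1 y /\ phi L L1 y = a.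
Hypothesis Hoverlap : forall L0 L1 L, P L0 -> P L1 -> P L ->
  L0 \proper L -> L1 \proper L -> forall x0 x1, D L0 L x0 -> D L1 L x1 ->
  phi L0 L x0 = phi L1 L x1 ->
  (Z L0 x0 /\ Z L1 x1 /\ f L0 x0 = f L1 x1) \/
  (P (L0 :&: L1) /\ exists x2, D (L0 :&: L1) L x2 /\ phi (L0 :&: L1) L x2 = phi L0 L x0).
Hypothesis HZclosed : forall L, P L -> closed (Z L).
Hypothesis Hfcont : forall L, P L -> forall G : Y -> Prop, open G ->
  exists O : W L -> Prop, open O /\ forall x, Z L x -> (O x <-> G (f L x)).
Hypothesis HZphi : forall L L', P L -> P L' -> L \proper L' -> forall x, D L L' x ->
  (Z L' (phi L L' x) <-> Z L x) /\ (Z L x -> f L' (phi L L' x) = f L x).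
Hypothesis HZeq : forall L L' (hL : P L) (hL' : P L') (a : W L) (b : W L'),
  Z L a -> Z L' b -> f L a = f L' b -> spi (mk hL a) = spi (mk hL' b).
Hypothesis Hfopen : forall L, P L -> forall O : W L -> Prop, open O ->
  exists G : Y -> Prop, open G /\ (forall x, Z L x -> (G (f L x) <-> O x)) /\
    (forall y, G y -> exists x, Z L x /\ f L x = y).
Hypothesis HY : hausdorff Y.
Local Set Implicit Arguments.

Definition le (a c : Sdisj) := a = c \/ Srel a c.

Lemma mk_inj L (hL hL' : P L) x y : mk hL x = mk hL' y -> x = y.
Proof. rewrite (proof_irrelevance _ hL' hL) /mk => e. exact: (inj_pairT2 _ _ _ _ _ e). Qed.

Lemma srel_trans a b c : Srel a b -> Srel b c -> Srel a c.
Proof.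
case: a => [[L hL] x]; case: b => [[L1 hL1] y]; case: c => [[L2 hL2] z].
rewrite /Srel /= => -[p1 [d1 ->]] [p2 [d2 ->]].
have [d3 e] := Hcoc _ _ _ hL hL1 hL2 p1 p2 _ d1 d2.
by split; [exact: proper_trans p1 p2 | split].
Qed.

Lemma le_trans a b c : le a b -> le b c -> le a c.
Proof.
case=> [->|ab] // [<-|bc]; [by right | by right; exact: srel_trans ab bc].
Qed.

Lemma up_le L L1 M (hL : P L) (hL1 : P L1) (hM : P M) x :
  L \proper L1 -> L1 \subset M -> D L L1 x -> D L M x ->
  le (mk hL1 (phi L L1 x)) (mk hM (phi L M x)).
Proof.
move=> p1 s1 d1 dM.
have [e|ne] := eqVneq L1 M.
  by subst M; left; rewrite (proof_irrelevance _ hM hL1).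
right; rewrite /Srel /=.
have p2 : L1 \proper M by rewrite properEneq ne s1.
have d2 := Htame2 _ _ _ hL hL1 hM p1 p2 _ d1 dM.
split=> //; split=> //.
by have [_ ->] := Hcoc _ _ _ hL hL1 hM p1 p2 _ d1 d2.
Qed.

Lemma confl b c d : le b c -> le b d -> exists e, le c e /\ le d e.
Proof.
case=> [<-|bc]; first by move=> bd; exists d; split=> //; left.
case=> [<-|bd]; first by exists c; split; [left|right].
move: bc bd; case: b => [[L hL] x]; case: c => [[L1 hL1] y]; case: d => [[L2 hL2] z].
rewrite /Srel /= => -[p1 [d1 ->]] [p2 [d2 ->]].
have [hM dM] := Htame1 _ _ _ hL hL1 hL2 p1 p2 _ d1 d2.
exists (mk hM (phi L (L1 :|: L2) x)); split.
  by apply: up_le => //; exact: subsetUl.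
by apply: up_le => //; exact: subsetUr.
Qed.

Lemma spi_eq a b : spi a = spi b <-> exists c, le a c /\ le b c.
Proof.
rewrite /spi qproj_eq; split.
  elim=> [x y r|x|x y _ [c [h1 h2]]|x y z _ [c1 [h1 h2]] _ [c2 [h3 h4]]].
  - by exists y; split; [right|left].
  - by exists x; split; left.
  - by exists c.
  - have [e [he1 he2]] := confl h2 h3.
    by exists e; split; [exact: le_trans h1 he1 | exact: le_trans h4 he2].
move=> [c [h1 h2]].
have g : forall u v, le u v -> gen_equiv Srel u v.
  by move=> u v [->|r]; [exact: rst_refl | exact: rst_step].
exact: rst_trans (g _ _ h1) (rst_sym _ _ _ _ (g _ _ h2)).
Qed.

Lemma spi_srel a b : Srel a b -> spi a = spi b.
Proof. by move=> r; apply/spi_eq; exists b; split; [right|left]. Qed.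

Lemma spi_inj L (hL hL' : P L) x y : spi (mk hL x) = spi (mk hL' y) -> x = y.
Proof.
move=> /spi_eq [[[M hM] m] [h1 h2]].
case: h1 => [e1|r1]; case: h2 => [e2|r2].
- by rewrite -e2 in e1; exact: mk_inj e1.
- have eLM : L = M by move: e1 => /(f_equal (fun s => proj1_sig (projT1 s))).
  subst M; move: r2; rewrite /Srel /= => -[]; by rewrite properxx.
- have eLM : L = M by move: e2 => /(f_equal (fun s => proj1_sig (projT1 s))).
  subst M; move: r1; rewrite /Srel /= => -[]; by rewrite properxx.
- move: r1 r2; rewrite /Srel /= => -[p1 [d1 e1]] [_ [d2 e2]].
  by apply: (emb_inj (Hemb _ _ hL hM p1)) => //; rewrite -e1 -e2.
Qed.

Lemma spi_down L I (hL : P L) (hI : P I) y a :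
  spi (mk hL y) = spi (mk hI a) -> L \proper I -> D L I y /\ phi L I y = a.
Proof.
move=> /spi_eq [[[M hM] m] [h1 h2]] pLI.
case: h1 => [e1|r1].
  have eLM : L = M by move: e1 => /(f_equal (fun s => proj1_sig (projT1 s))).
  subst M; case: h2 => [e2|r2].
    have eIL : I = L by move: e2 => /(f_equal (fun s => proj1_sig (projT1 s))).
    by subst I; rewrite properxx in pLI.
  move: r2; rewrite /Srel /= => -[p2 _].
  by have := proper_trans pLI p2; rewrite properxx.
move: r1; rewrite /Srel /= => -[p1 [d1 e1]].
case: h2 => [e2|r2].
  have eIM : I = M by move: e2 => /(f_equal (fun s => proj1_sig (projT1 s))).
  subst M; have := mk_inj e2 => ->; by split.
move: r2; rewrite /Srel /= => -[p2 [d2 e2]].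
apply: (Hdown _ _ _ hL hI hM pLI p2 _ _ d1 d2).
by rewrite -e1 -e2.
Qed.

Definition Zs (a : Sdisj) := Z _ (projT2 a).
Definition fs (a : Sdisj) := f _ (projT2 a).

Lemma le_Z a c : le a c -> (Zs a <-> Zs c) /\ (Zs a -> fs a = fs c).
Proof.
case=> [->|]; first by [].
case: a => [[L hL] x]; case: c => [[L1 hL1] y].
rewrite /Srel /Zs /fs /= => -[p [d ->]].
have [h1 h2] := HZphi _ _ hL hL1 p _ d.
split; first by split=> /h1.
by move=> zx; rewrite h2.
Qed.

Lemma spi_Z a b : spi a = spi b -> Zs a -> Zs b /\ fs a = fs b.
Proof.
move=> /spi_eq [c [h1 h2]] za.
have [e1 f1] := le_Z h1; have [e2 f2] := le_Z h2.
have zc : Zs c by apply/e1.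
have zb : Zs b by apply/e2.
by split=> //; rewrite f1 // f2.
Qed.

Definition Fam := forall L, W L -> Prop.

Definition inv_at (G : Y -> Prop) (V : Fam) L :=
  (forall y, Z L y -> (V L y <-> G (f L y))) /\
  (forall L0, P L0 -> L0 \proper L -> forall x, D L0 L x -> (V L0 x <-> V L (phi L0 L x))).

Definition Good (G : Y -> Prop) (V : Fam) L (y : W L) :=
  (Z L y /\ G (f L y)) \/
  exists L0 (x : W L0), P L0 /\ L0 \proper L /\ D L0 L x /\ V L0 x /\ phi L0 L x = y.
Definition Bad (G : Y -> Prop) (V : Fam) L (y : W L) :=
  (Z L y /\ ~ G (f L y)) \/
  exists L0 (x : W L0), P L0 /\ L0 \proper L /\ D L0 L x /\ ~ V L0 x /\ phi L0 L x = y.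

Lemma rel_down G V L (hL : P L) :
  (forall L0, P L0 -> L0 \proper L -> inv_at G V L0) ->
  forall La Lb (hLa : P La) (hLb : P Lb) xa xb, La \subset Lb -> Lb \proper L ->
  D La L xa -> D Lb L xb -> phi La L xa = phi Lb L xb -> (V La xa <-> V Lb xb).
Proof.
move=> hinv La Lb hLa hLb xa xb s pb da db e.
have [eab|nab] := eqVneq La Lb.
  subst Lb; have -> : xa = xb by apply: (emb_inj (Hemb _ _ hLa hL pb)).
  by [].
have pab : La \proper Lb by rewrite properEneq nab s.
have pa : La \proper L := proper_trans pab pb.
have [dab eab] := Hdown _ _ _ hLa hLb hL pab pb _ _ da db e.
have [_ h] := hinv _ hLb pb.
by rewrite -eab; apply: h.
Qed.

Lemma good_bad G V L (hL : P L) (y : W L) :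
  (forall L0, P L0 -> L0 \proper L -> inv_at G V L0) ->
  Good G V y -> Bad G V y -> False.
Proof.
move=> hinv.
case=> [[zy gy]|[L0 [x0 [h0 [p0 [d0 [v0 e0]]]]]]]
  [[zy' gy']|[L1 [x1 [h1 [p1 [d1 [v1 e1]]]]]]].
- by apply: gy'.
- subst y; have [hz hf] := HZphi _ _ h1 hL p1 _ d1.
  have zx1 : Z L1 x1 by apply/hz.
  apply: v1; apply/((hinv _ h1 p1).1 _ zx1); by rewrite -hf.
- subst y; have [hz hf] := HZphi _ _ h0 hL p0 _ d0.
  have zx0 : Z L0 x0 by apply/hz.
  apply: gy'; rewrite hf //; by apply/((hinv _ h0 p0).1 _ zx0).
- have e : phi L0 L x0 = phi L1 L x1 by rewrite e0 e1.
  case: (Hoverlap _ _ _ h0 h1 hL p0 p1 _ _ d0 d1 e) => [[z0 [z1 ef]]|[h2 [x2 [d2 e2]]]].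
    apply: v1; apply/((hinv _ h1 p1).1 _ z1); rewrite -ef.
    by apply/((hinv _ h0 p0).1 _ z0).
  have r0 := rel_down hL hinv h2 h0 (subsetIl L0 L1) p0 d2 d0 e2.
  have r1 := rel_down hL hinv h2 h1 (subsetIr L0 L1) p1 d2 d1 (etrans e2 e).
  by apply: v1; apply/r1; apply/r0.
Qed.

Lemma Bad_closed G V L (hL : P L) : open G ->
  (forall L0, P L0 -> L0 \proper L -> open (V L0)) -> closed (@Bad G V L).
Proof.
move=> oG oV.
apply: (closed_ext (A := fun y => (Z L y /\ ~ G (f L y)) \/
  exists L0, exists x : W L0, P L0 /\ L0 \proper L /\ D L0 L x /\ ~ V L0 x /\ phi L0 L x = y)) => //.
apply: closed_setU.
  have [O [oO hO]] := Hfcont _ hL G oG.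
  apply: (closed_ext (A := fun y => Z L y /\ ~ O y)).
    by move=> y; split=> -[zy h]; split=> // h'; apply: h; apply/(hO _ zy).
  by apply: closed_setI; [exact: HZclosed | exact: closed_compl].
apply: closed_fin_union => L0.
have [[h0 p0]|nh] := classic (P L0 /\ L0 \proper L); last first.
  apply: (closed_ext (A := fun _ => False)); last exact: closed_empty.
  by move=> y; split=> // [[x [h0 [p0 _]]]]; apply: nh.
have [O' [oO' hO']] := emb_open (Hemb _ _ h0 hL p0) (oV _ h0 p0).
apply: (closed_ext (A := fun y => (exists x, D L0 L x /\ phi L0 L x = y) /\ ~ O' y)).
  move=> y; split.
    move=> [[x [dx <-]] ny]; exists x; do 3 (split=> //); split=> //.
    by move=> vx; apply: ny; apply/(hO' _ dx).
  move=> [x [_ [_ [dx [nv <-]]]]]; split; first by exists x.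
  by move=> o; apply: nv; apply/(hO' _ dx).
by apply: closed_setI; [exact: HCclosed | exact: closed_compl].
Qed.

Section Construct.
Local Unset Implicit Arguments.
Variables (G G' : Y -> Prop) (R R' H H' : Fam).
Hypothesis oG : open G.
Hypothesis oG' : open G'.
Hypothesis dG : forall y, ~ (G y /\ G' y).
Hypothesis cH : forall L, P L -> closed (H L) /\ closed (H' L).
Hypothesis pull : forall L0 L, P L0 -> P L -> L0 \proper L -> forall z, D L0 L z ->
  (H L (phi L0 L z) -> H L0 z) /\ (H' L (phi L0 L z) -> H' L0 z) /\
  (R L (phi L0 L z) -> R L0 z) /\ (R' L (phi L0 L z) -> R' L0 z).
Hypothesis hRH : forall L, P L -> forall y,
  (R L y -> ~ H L y /\ H' L y) /\ (R' L y -> ~ H' L y /\ H L y).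
Hypothesis hZ : forall L, P L -> forall y, Z L y ->
  (G (f L y) -> ~ H L y) /\ (G' (f L y) -> ~ H' L y) /\
  (R L y -> G (f L y)) /\ (R' L y -> G' (f L y)).
Local Set Implicit Arguments.

Definition props_at (V V' : Fam) L (VL VL' : W L -> Prop) :=
  open VL /\ open VL' /\
  (forall y, Z L y -> (VL y <-> G (f L y)) /\ (VL' y <-> G' (f L y))) /\
  (forall L0, P L0 -> L0 \proper L -> forall x, D L0 L x ->
     (V L0 x <-> VL (phi L0 L x)) /\ (V' L0 x <-> VL' (phi L0 L x))) /\
  (forall y, (R L y -> VL y) /\ (R' L y -> VL' y) /\ (VL y -> ~ H L y) /\
     (VL' y -> ~ H' L y) /\ ~ (VL y /\ VL' y)).

Definition Inv n (V V' : Fam) :=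
  forall L, P L -> #|L| <= n -> props_at V V' (V L) (V' L).

Lemma step_local n V V' L : Inv n V V' -> P L -> #|L| = n.+1 ->
  exists VL VL', props_at V V' (L:=L) VL VL'.
Proof.
move=> IH hL cL.
have small : forall L0 : {set 'I_N}, L0 \proper L -> #|L0| <= n.
  by move=> L0 p; have := proper_card p; rewrite cL ltnS.
have inv1 : forall L0, P L0 -> L0 \proper L -> inv_at G V L0 /\ inv_at G' V' L0.
  move=> L0 h0 p0; have [_ [_ [hz [hd _]]]] := IH _ h0 (small _ p0).
  split; split.
  - by move=> y zy; exact: (hz y zy).1.
  - by move=> L1 h1 p1 x d; exact: (hd _ h1 p1 x d).1.
  - by move=> y zy; exact: (hz y zy).2.
  - by move=> L1 h1 p1 x d; exact: (hd _ h1 p1 x d).2.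
have IHo : forall L0, P L0 -> L0 \proper L -> open (V L0) /\ open (V' L0).
  by move=> L0 h0 p0; have [o1 [o2 _]] := IH _ h0 (small _ p0).
have IHr : forall L0, P L0 -> L0 \proper L -> forall y,
   (R L0 y -> V L0 y) /\ (R' L0 y -> V' L0 y) /\ (V L0 y -> ~ H L0 y) /\
   (V' L0 y -> ~ H' L0 y) /\ ~ (V L0 y /\ V' L0 y).
  by move=> L0 h0 p0; have [_ [_ [_ [_ hr]]]] := IH _ h0 (small _ p0).
have [d [hd hop]] := Hmet _ hL.
pose A := fun y => @Bad G V L y \/ H L y.
pose A' := fun y => @Bad G' V' L y \/ H' L y.
pose S := fun y => @Good G V L y \/ R L y.
pose S' := fun y => @Good G' V' L y \/ R' L y.
have cA : closed A.
  apply: closed_setU; last exact: (cH _ hL).1.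
  by apply: Bad_closed => // L0 h0 p0; exact: (IHo _ h0 p0).1.
have cA' : closed A'.
  apply: closed_setU; last exact: (cH _ hL).2.
  by apply: Bad_closed => // L0 h0 p0; exact: (IHo _ h0 p0).2.
have hSA : forall y, S y -> ~ A y.
  move=> y [gy|ry] [by'|hy].
  - by apply: (good_bad hL _ gy by') => L0 h0 p0; exact: (inv1 _ h0 p0).1.
  - case: gy => [[zy Gy]|[L0 [x [h0 [p0 [dx [vx ex]]]]]]].
      exact: ((hZ _ hL _ zy).1 Gy hy).
    subst y; have := (pull _ _ h0 hL p0 _ dx).1 hy.
    exact: ((IHr _ h0 p0 x).2.2.1 vx).
  - case: by' => [[zy nG]|[L0 [x [h0 [p0 [dx [vx ex]]]]]]].
      exact: (nG ((hZ _ hL _ zy).2.2.1 ry)).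
    subst y; apply: vx; apply: (IHr _ h0 p0 x).1.
    exact: ((pull _ _ h0 hL p0 _ dx).2.2.1 ry).
  - exact: ((hRH _ hL y).1 ry).1 hy.
have hSA' : forall y, S' y -> ~ A' y.
  move=> y [gy|ry] [by'|hy].
  - by apply: (good_bad hL _ gy by') => L0 h0 p0; exact: (inv1 _ h0 p0).2.
  - case: gy => [[zy Gy]|[L0 [x [h0 [p0 [dx [vx ex]]]]]]].
      exact: ((hZ _ hL _ zy).2.1 Gy hy).
    subst y; have := (pull _ _ h0 hL p0 _ dx).2.1 hy.
    exact: ((IHr _ h0 p0 x).2.2.2.1 vx).
  - case: by' => [[zy nG]|[L0 [x [h0 [p0 [dx [vx ex]]]]]]].
      exact: (nG ((hZ _ hL _ zy).2.2.2 ry)).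
    subst y; apply: vx; apply: (IHr _ h0 p0 x).2.1.
    exact: ((pull _ _ h0 hL p0 _ dx).2.2.2 ry).
  - exact: ((hRH _ hL y).2 ry).1 hy.
have hSA'' : forall y, S y -> A' y.
  move=> y [gy|ry]; last by right; exact: ((hRH _ hL y).1 ry).2.
  left; case: gy => [[zy Gy]|[L0 [x [h0 [p0 [dx [vx ex]]]]]]].
    by left; split=> // G'y; apply: (dG _ (conj Gy G'y)).
  right; exists L0, x; do 3 (split=> //); split=> // v'x.
  exact: (IHr _ h0 p0 x).2.2.2.2 (conj vx v'x).
have hS'A : forall y, S' y -> A y.
  move=> y [gy|ry]; last by right; exact: ((hRH _ hL y).2 ry).2.
  left; case: gy => [[zy Gy]|[L0 [x [h0 [p0 [dx [vx ex]]]]]]].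
    by left; split=> // G'y; apply: (dG _ (conj G'y Gy)).
  right; exists L0, x; do 3 (split=> //); split=> // v'x.
  exact: (IHr _ h0 p0 x).2.2.2.2 (conj v'x vx).
have [VL [VL' [oVL [oVL' [hS [hS' [hVA [hVA' hdis]]]]]]]] :=
  ball_sep hd hop cA cA' hSA hSA' hSA'' hS'A.
exists VL, VL'.
split=> //; split=> //; split.
  move=> y zy; split; split.
  - move=> v; apply: NNPP => nG; apply: (hVA y v); left; left; by split.
  - by move=> Gy; apply: hS; left; left.
  - move=> v; apply: NNPP => nG; apply: (hVA' y v); left; left; by split.
  - by move=> Gy; apply: hS'; left; left.
split.
  move=> L0 h0 p0 x dx; split; split.
  - by move=> vx; apply: hS; left; right; exists L0, x.
  - move=> v; apply: NNPP => nv; apply: (hVA _ v); left; right; by exists L0, x.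
  - by move=> vx; apply: hS'; left; right; exists L0, x.
  - move=> v; apply: NNPP => nv; apply: (hVA' _ v); left; right; by exists L0, x.
move=> y; split; first by move=> r; apply: hS; right.
split; first by move=> r; apply: hS'; right.
split; first by move=> v h; apply: (hVA y v); right.
split; first by move=> v h; apply: (hVA' y v); right.
exact: hdis.
Qed.

Lemma inv_all n : exists V V', Inv n V V'.
Proof.
elim: n => [|n [V [V' IH]]].
  exists (fun _ _ => False), (fun _ _ => False) => L hL.
  by rewrite leqn0 cards_eq0 (negbTE (HPne _ hL)).
have ch : forall L, exists pr : (W L -> Prop) * (W L -> Prop),
    P L -> #|L| = n.+1 -> props_at V V' pr.1 pr.2.
  move=> L; have [[hL cL]|nh] := classic (P L /\ #|L| = n.+1).
    by have [VL [VL' h]] := step_local IH hL cL; exists (VL, VL').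
  by exists ((fun _ => False), (fun _ => False)) => hL cL; case: nh.
pose F L := proj1_sig (constructive_indefinite_description _ (ch L)).
have hF : forall L, P L -> #|L| = n.+1 -> props_at V V' (F L).1 (F L).2.
  by move=> L; exact: (proj2_sig (constructive_indefinite_description _ (ch L))).
pose V2 : Fam := fun L => if #|L| <= n then V L else (F L).1.
pose V2' : Fam := fun L => if #|L| <= n then V' L else (F L).2.
exists V2, V2' => L hL cL.
have eq2 : forall L0 : {set 'I_N}, #|L0| <= n -> V2 L0 = V L0 /\ V2' L0 = V' L0.
  by move=> L0 c0; rewrite /V2 /V2' c0.
have key : forall (VL VL' : W L -> Prop), props_at V V' VL VL' ->
    V2 L = VL -> V2' L = VL' -> props_at V2 V2' (V2 L) (V2' L).
  move=> VL VL' [o1 [o2 [hz [hd hr]]]] e1 e2; rewrite e1 e2.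
  split=> //; split=> //; split=> //; split=> // L0 h0 p0 x dx.
  have c0 : #|L0| <= n by rewrite -ltnS; apply: leq_trans (proper_card p0) cL.
  by have [-> ->] := eq2 _ c0; apply: hd.
case: (leqP #|L| n) => c.
  by apply: (key (V L) (V' L)); [exact: IH | rewrite /V2 c | rewrite /V2' c].
have cL' : #|L| = n.+1 by apply/eqP; rewrite eqn_leq cL c.
by apply: (key (F L).1 (F L).2); [exact: hF | rewrite /V2 leqNgt c | rewrite /V2' leqNgt c].
Qed.

Lemma construct : exists V V' : Fam,
  forall L, P L -> open (V L) /\ open (V' L) /\
     (forall L0, P L0 -> L0 \proper L -> forall x, D L0 L x ->
        (V L0 x <-> V L (phi L0 L x)) /\ (V' L0 x <-> V' L (phi L0 L x))) /\
     forall y, (R L y -> V L y) /\ (R' L y -> V' L y) /\ (V L y -> ~ H L y) /\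
        (V' L y -> ~ H' L y) /\ ~ (V L y /\ V' L y).
Proof.
have [V [V' h]] := inv_all N.
exists V, V' => L hL.
have cL : #|L| <= N by have := max_card L; rewrite card_ord.
have [o1 [o2 [_ [hd hr]]]] := h L hL cL.
by do 3 (split => //).
Qed.

End Construct.

Definition OV (V : Fam) (p : Squot) := exists a, p = spi a /\ V _ (projT2 a).

Lemma OV_prop (V : Fam) : (forall L, P L -> open (V L)) ->
  (forall L0 L, P L0 -> P L -> L0 \proper L -> forall x, D L0 L x ->
     (V L0 x <-> V L (phi L0 L x))) ->
  open (OV V) /\ forall b, OV V (spi b) <-> V _ (projT2 b).
Proof.
move=> hO hs.
have := @sat_open Sdisj Srel (fun a => V _ (projT2 a)).
case.
- by move=> [[L hL]]; exact: hO.
- move=> [[L hL] x] [[L1 hL1] y]; rewrite /Srel /= => -[p [d ->]].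
  exact: hs.
by move=> o h; split.
Qed.

Theorem abs_hausdorff : hausdorff Squot.
Proof.
move=> p q npq.
pose rep (r : Squot) : Fam := fun L y => exists hL : P L, spi (mk hL y) = r.
have rep_eq : forall r L (y : W L) (hL : P L), rep r L y -> spi (mk hL y) = r.
  by move=> r L y hL [h e]; rewrite (proof_irrelevance _ hL h).
have [GG [GG' [oG [oG' [dG [hGp hGq]]]]]] : exists G G' : Y -> Prop,
   open G /\ open G' /\ (forall y, ~ (G y /\ G' y)) /\
   (forall L y, rep p L y -> Z L y -> G (f L y)) /\
   (forall L y, rep q L y -> Z L y -> G' (f L y)).
  have fval : forall r L1 (y1 : W L1) (h1 : P L1), spi (mk h1 y1) = r -> Z L1 y1 ->
      forall L y, rep r L y -> Z L y -> f L y = f L1 y1.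
    move=> r L1 y1 h1 e1 z1 L y [h e] zy.
    have : spi (mk h y) = spi (mk h1 y1) by rewrite e e1.
    by move=> /spi_Z [] // _.
  have [[L1 [y1 [[h1 e1] z1]]]|nzp] := classic (exists L (y : W L), rep p L y /\ Z L y);
  have [[L2 [y2 [[h2 e2] z2]]]|nzq] := classic (exists L (y : W L), rep q L y /\ Z L y).
  - have ne : f L1 y1 <> f L2 y2.
      by move=> e; apply: npq; rewrite -e1 -e2; exact: HZeq.
    have [G [G' [oG [oG' [g1 [g2 dGG]]]]]] := HY _ _ ne.
    exists G, G'; do 3 (split=> //); split.
      by move=> L y r zy; rewrite (fval _ _ _ _ e1 z1 _ _ r zy).
    by move=> L y r zy; rewrite (fval _ _ _ _ e2 z2 _ _ r zy).
  - exists (fun _ => True), (fun _ => False); split; first exact: open_setT.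
    split; first exact: open_empty.
    split; first by move=> y [].
    split; first by [].
    by move=> L y r zy; apply: nzq; exists L, y.
  - exists (fun _ => False), (fun _ => True); split; first exact: open_empty.
    split; first exact: open_setT.
    split; first by move=> y [].
    split; last by [].
    by move=> L y r zy; apply: nzp; exists L, y.
  - exists (fun _ => False), (fun _ => False); split; first exact: open_empty.
    split; first exact: open_empty.
    split; first by move=> y [].
    split=> L y r zy; [apply: nzp | apply: nzq]; by exists L, y.
have rep_closed : forall r L, P L -> closed (rep r L).
  move=> r L hL; have [d [hd hop]] := Hmet _ hL.
  apply: (closed_le1 hd hop) => y y' [h e] [h' e'].
  by apply: (spi_inj (hL := h) (hL' := h')); rewrite e e'.
have rep_pull : forall r L0 L, P L0 -> P L -> L0 \proper L -> forall z, D L0 L z ->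
    rep r L (phi L0 L z) -> rep r L0 z.
  move=> r L0 L h0 hL p0 z dz [h e]; exists h0; rewrite -e; apply: spi_srel.
  by rewrite /Srel /=.
have rep_pq : forall L (y : W L), rep p L y -> rep q L y -> False.
  by move=> L y [h e] [h' e']; apply: npq; rewrite -e -e' (proof_irrelevance _ h' h).
have [V [V' hV]] := @construct GG GG' (rep p) (rep q) (rep q) (rep p) oG oG' dG
  (fun L hL => conj (rep_closed q L hL) (rep_closed p L hL))
  (fun L0 L h0 hL p0 z dz => conj (rep_pull q L0 L h0 hL p0 z dz)
     (conj (rep_pull p L0 L h0 hL p0 z dz) (conj (rep_pull p L0 L h0 hL p0 z dz)
     (rep_pull q L0 L h0 hL p0 z dz))))
  (fun L hL y => conj (fun r => conj (rep_pq L y r) r) (fun r => conj (fun r' => rep_pq L y r' r) r))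
  (fun L hL y zy => conj (fun g r => dG _ (conj g (hGq L y r zy)))
     (conj (fun g r => dG _ (conj (hGp L y r zy) g)) (conj (hGp L y^~ zy) (hGq L y^~ zy)))).
have hO : forall L, P L -> open (V L) by move=> L hL; have [o _] := hV L hL.
have hO' : forall L, P L -> open (V' L) by move=> L hL; have [_ [o _]] := hV L hL.
have hs : forall L0 L, P L0 -> P L -> L0 \proper L -> forall x, D L0 L x ->
    (V L0 x <-> V L (phi L0 L x)).
  by move=> L0 L h0 hL p0 x dx; have [_ [_ [h _]]] := hV L hL; exact: (h _ h0 p0 x dx).1.
have hs' : forall L0 L, P L0 -> P L -> L0 \proper L -> forall x, D L0 L x ->
    (V' L0 x <-> V' L (phi L0 L x)).
  by move=> L0 L h0 hL p0 x dx; have [_ [_ [h _]]] := hV L hL; exact: (h _ h0 p0 x dx).2.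
have [oV hV1] := OV_prop hO hs.
have [oV' hV1'] := OV_prop hO' hs'.
exists (OV V), (OV V'); split=> //; split=> //.
have [[[L hL] x] ea] := qproj_surj p.
have [[[L' hL'] x'] eb] := qproj_surj q.
split.
  rewrite ea; apply/hV1 => /=; have [_ [_ [_ h]]] := hV L hL.
  by apply: (h x).1; exists hL; rewrite ea.
split.
  rewrite eb; apply/hV1' => /=; have [_ [_ [_ h]]] := hV L' hL'.
  by apply: (h x').2.1; exists hL'; rewrite eb.
move=> z [h1 h2]; have [[[M hM] m] ez] := qproj_surj z.
move: h1 h2; rewrite ez => /hV1 /= v /hV1' /= v'.
have [_ [_ [_ h]]] := hV M hM.
exact: (h m).2.2.2.2 (conj v v').
Qed.

Lemma emb_sep I (hI : P I) (O : W I -> Prop) x0 : open O -> O x0 ->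
  exists V : Fam, (forall L, P L -> open (V L)) /\
    (forall L0 L, P L0 -> P L -> L0 \proper L -> forall x, D L0 L x ->
       (V L0 x <-> V L (phi L0 L x))) /\
    V I x0 /\ forall y, V I y -> O y.
Proof.
move=> oO Ox0.
have [G [oG [hGO hGZ]]] := Hfopen _ hI O oO.
pose p := spi (mk hI x0).
pose rep : Fam := fun L y => exists hL : P L, spi (mk hL y) = p.
pose Bel : Fam := fun L y => (L \proper I /\ D L I y /\ O (phi L I y)) \/
  (exists e : L = I, O (eq_rect L W y I e)).
pose H : Fam := fun L y => L \subset I /\ ~ Bel L y.
have Bel_I : forall y, Bel I y <-> O y.
  move=> y; split.
    case=> [[]|[e]]; first by rewrite properxx.
    by rewrite (eq_irrelevance e erefl).
  by move=> oy; right; exists erefl.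
have rep_Bel : forall L (hL : P L) y x, L \subset I -> spi (mk hL y) = spi (mk hI x) ->
    O x -> Bel L y.
  move=> L hL y x s e ox.
  have [eLI|nLI] := eqVneq L I.
    by subst L; apply/Bel_I; have -> : y = x by apply: (spi_inj e).
  have pLI : L \proper I by rewrite properEneq nLI s.
  have [dy ey] := spi_down e pLI.
  by left; rewrite ey.
have cH : forall L, P L -> closed (H L) /\ closed (fun _ : W L => True).
  move=> L hL; split; last exact: closed_all.
  have [sLI|nsLI] := boolP (L \subset I); last first.
    apply: (closed_ext (A := fun _ => False)); last exact: closed_empty.
    by move=> y; split=> // -[s _]; rewrite s in nsLI.
  have [eLI|nLI] := eqVneq L I.
    subst L; apply: (closed_ext (A := fun y => ~ O y)); last exact: closed_compl.
    by move=> y; split=> [h|[_ h]]; [split=> // /Bel_I | move=> oy; apply: h; apply/Bel_I].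
  have pLI : L \proper I by rewrite properEneq nLI sLI.
  have [O' [oO' hO']] := emb_cont (Hemb _ _ hL hI pLI) oO.
  apply: (closed_ext (A := fun y => ~ (D L I y /\ O' y))).
    move=> y; split.
      move=> h; split=> // -[[_ [dy oy]]|[e _]].
        by apply: h; split=> //; apply/(hO' _ dy).
      by rewrite e properxx in pLI.
    move=> [_ h] [dy oy]; apply: h; left; do 2 (split=> //); by apply/(hO' _ dy).
  by apply: closed_compl; apply: open_setI => //; exact: HDopen.
have pull : forall L0 L, P L0 -> P L -> L0 \proper L -> forall z, D L0 L z ->
  (H L (phi L0 L z) -> H L0 z) /\ ((fun _ _ => True) L (phi L0 L z) -> True) /\
  (rep L (phi L0 L z) -> rep L0 z) /\ ((fun _ _ => False) L (phi L0 L z) -> False).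
  move=> L0 L h0 hL p0 z dz; split; last first.
    split=> //; split=> // -[h e]; exists h0; rewrite -e; apply: spi_srel.
    by rewrite /Srel /=.
  move=> [s nB]; split; first exact: subset_trans (proper_sub p0) s.
  case=> [[p0I [d0I o0]]|[e _]]; last first.
    by subst L0; have := proper_sub_trans p0 s; rewrite properxx.
  apply: nB.
  have [eLI|nLI] := eqVneq L I; first by subst L; apply/Bel_I.
  have pLI : L \proper I by rewrite properEneq nLI s.
  have d2 := Htame2 _ _ _ h0 hL hI p0 pLI _ dz d0I.
  have [_ e2] := Hcoc _ _ _ h0 hL hI p0 pLI _ dz d2.
  by left; rewrite e2.
have hRH : forall L, P L -> forall y,
  (rep L y -> ~ H L y /\ True) /\ (False -> ~ True /\ H L y).
  move=> L hL y; split=> // -[h e]; split=> // -[s nB]; apply: nB.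
  exact: (rep_Bel _ h y x0 s e Ox0).
have hZ : forall L, P L -> forall y, Z L y ->
  (G (f L y) -> ~ H L y) /\ (False -> ~ True) /\
  (rep L y -> G (f L y)) /\ (False -> False).
  move=> L hL y zy; split; last first.
    split=> //; split=> // -[h e].
    have [zx ef] := spi_Z e zy; rewrite /fs /= in ef; rewrite ef.
    by apply/(hGO _ zx).
  move=> g [s nB]; apply: nB.
  have [x [zx ex]] := hGZ _ g.
  have ox : O x by apply/(hGO _ zx); rewrite ex.
  apply: (rep_Bel _ hL y x s _ ox).
  by apply: HZeq => //; rewrite ex.
have [V [V' hV]] := @construct G (fun _ => False) rep (fun _ _ => False) H (fun _ _ => True)
  oG (open_empty _) (fun y h => proj2 h) cH pull hRH hZ.
exists V; split; first by move=> L hL; have [o _] := hV L hL.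
split.
  by move=> L0 L h0 hL p0 x dx; have [_ [_ [h _]]] := hV L hL; exact: (h _ h0 p0 x dx).1.
have [_ [_ [_ h]]] := hV I hI.
split; first by apply: (h x0).1; exists hI.
move=> y vy; apply/Bel_I; apply: NNPP => nb.
exact: ((h y).2.2.1 vy (conj (subxx _) nb)).
Qed.

Theorem abs_embedding I (hI : P I) : embedding (fun x : W I => spi (mk hI x)).
Proof.
set F := fun x : W I => spi (mk hI x).
pose g (y : subspace (image_of F)) : W I :=
  proj1_sig (constructive_indefinite_description _ (proj2_sig y)).
have hg : forall y, F (g y) = proj1_sig y :=
  fun y => proj2_sig (constructive_indefinite_description _ (proj2_sig y)).
exists g; split.
  move=> x; apply: (spi_inj (hL := hI) (hL' := hI)); exact: (hg (corestr F x)).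
split.
  move=> y; apply: eq_sig_hprop => /=; first by move=> ? ? ?; exact: proof_irrelevance.
  exact: hg.
split.
  move=> V [Wq [oWq hV]].
  apply: (open_ext (A := fun x => Wq (F x))); first by move=> x; rewrite hV.
  exact: (oWq (exist P I hI)).
move=> O oO.
pose Wq := fun q : Squot => exists V : Fam, (forall L, P L -> open (V L)) /\
  (forall L0 L, P L0 -> P L -> L0 \proper L -> forall x, D L0 L x ->
     (V L0 x <-> V L (phi L0 L x))) /\ (forall y, V I y -> O y) /\ OV V q.
exists Wq; split.
  apply: open_local => q [V [hO [hs [hsub hq]]]].
  have [oV _] := OV_prop hO hs.
  exists (OV V); split=> //; split=> // q' hq'; by exists V.
move=> y; split.
  move=> Ogy; have [V [hO [hs [hVx hsub]]]] := emb_sep hI oO Ogy.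
  exists V; do 3 (split=> //); rewrite -hg; apply/(OV_prop hO hs).2; exact: hVx.
move=> [V [hO [hs [hsub hq]]]]; apply: hsub.
rewrite -hg in hq; exact: (((OV_prop hO hs).2 (mk hI (g y))).1 hq).
Qed.

End Abstract.

Section Inst.
Variables (X : Top) (N : nat) (K : KData X N).
Hypothesis hX : metrizable X.
Hypothesis hK : tame_top_atlas K.
Implicit Types I J L H : {set 'I_N}.

Lemma chartK I : IK K I -> chart_ok K I.
Proof. by case: hK => -[_ [_ [h _]]] _; apply: h. Qed.
Lemma ccK I J : IK K I -> IK K J -> I \proper J -> coord_change_ok K I J.
Proof. by case: hK => -[_ [_ [_ [h _]]]] _; apply: h. Qed.
Lemma cocK I J L : IK K I -> IK K J -> IK K L -> I \proper J -> J \proper L ->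
  cocycle_ok K I J L.
Proof. by case: hK => -[_ [_ [_ [_ h]]]] _; apply: h. Qed.
Lemma FopenK i : open (Fp K i).
Proof. by case: hK => -[h _] _. Qed.
Lemma EFclosedK I J : IK K J -> I \subset J -> closed (EF K I J).
Proof. by case: hK => _ [[h _] _]; apply: h. Qed.
Lemma EFJJK J e : IK K J -> EF K J J e.
Proof. by case: hK => _ [[_ [h _]] _] hJ; apply: h. Qed.
Lemma EF0K J e : IK K J -> (EF K set0 J e <-> exists x, e = zr K x).
Proof. by case: hK => _ [[_ [_ [h _]]] _] hJ; apply: h. Qed.
Lemma EFiiK I J L : IK K J -> IK K L -> I \subset J -> J \proper L ->
  forall f : E K L,
    (exists e, UU K J L (pr K e) /\ EF K I J e /\ Phi K J L e = f) <->
    (EF K I L f /\ exists x, UU K J L x /\ phi K J L x = pr K f).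
Proof. by case: hK => _ [[_ [_ [_ [h _]]]] _]; apply: h. Qed.
Lemma EFiiiK I H J : IK K J -> I \subset J -> H \subset J ->
  forall e, EF K I J e /\ EF K H J e <-> EF K (I :&: H) J e.
Proof. by case: hK => _ [[_ [_ [_ [_ [h _]]]]] _]; apply: h. Qed.
Lemma EFivK I J : IK K I -> IK K J -> I \proper J ->
  forall x, UU K I J x -> EF K I J (sc K (phi K I J x)).
Proof. by case: hK => _ [[_ [_ [_ [_ [_ h]]]]] _] hI hJ p; have [] := h _ _ hI hJ p. Qed.
Lemma t1K I J L : IK K I -> IK K J -> IK K L -> I \subset J -> I \subset L ->
  forall x : U K I, Uext J x /\ Uext L x <-> Uext (J :|: L) x.
Proof. by case: hK => _ [_ [h _]]; apply: h. Qed.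
Lemma t2K I J L : IK K I -> IK K J -> IK K L -> I \proper J -> J \subset L ->
  forall y : U K J,
    (exists x, Uext L x /\ UU K I J x /\ phi K I J x = y) <->
    (Uext L y /\ EF K I J (sc K y)).
Proof. by case: hK => _ [_ [_ h]]; apply: h. Qed.

Lemma neqF (I J : {set 'I_N}) : I \proper J -> (I == J) = false.
Proof. by move=> p; apply/negbTE; exact: proper_neq. Qed.

Lemma metUK I : IK K I -> metrizable (U K I).
Proof. by move/chartK => [_ [_ [h _]]]. Qed.
Lemma metEK I : IK K I -> metrizable (E K I).
Proof. by move/chartK => [_ [_ [_ [_ [_ [h _]]]]]]. Qed.
Lemma cprK I : IK K I -> continuous (pr K (I:=I)).
Proof. by move/chartK => [_ [_ [_ [_ [_ [_ [h _]]]]]]]. Qed.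
Lemma czrK I : IK K I -> continuous (zr K (I:=I)).
Proof. by move/chartK => [_ [_ [_ [_ [_ [_ [_ [h _]]]]]]]]. Qed.
Lemma cscK I : IK K I -> continuous (sc K (I:=I)).
Proof. by move/chartK => [_ [_ [_ [_ [_ [_ [_ [_ [h _]]]]]]]]]. Qed.
Lemma przrK I : IK K I -> forall x : U K I, pr K (zr K x) = x.
Proof. by move/chartK => [_ [_ [_ [_ [_ [_ [_ [_ [_ [h _]]]]]]]]]]. Qed.
Lemma prscK I : IK K I -> forall x : U K I, pr K (sc K x) = x.
Proof. by move/chartK => [_ [_ [_ [_ [_ [_ [_ [_ [_ [_ [h _]]]]]]]]]]]. Qed.
Lemma embpsiK I : IK K I -> embedding_on (psi K (I:=I)) (@Z _ _ K I).
Proof. by move/chartK => [_ [_ [_ [_ [_ [_ [_ [_ [_ [_ [_ [h _]]]]]]]]]]]]. Qed.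
Lemma FIimgK I : IK K I -> forall y, FI K I y <-> exists x : U K I, Z x /\ psi K x = y.
Proof. by move/chartK => [_ [_ [_ [_ [_ [_ [_ [_ [_ [_ [_ [_ h]]]]]]]]]]]]. Qed.

Section CC.
Variables (I J : {set 'I_N}) (hI : IK K I) (hJ : IK K J) (p : I \proper J).
Lemma UUoK : open (UU K I J).
Proof. by have [h _] := ccK hI hJ p. Qed.
Lemma UUZK x : UU K I J x /\ Z x <-> Z x /\ FI K I (psi K x) /\ FI K J (psi K x).
Proof. by have [_ [h _]] := ccK hI hJ p. Qed.
Lemma embPhiK : embedding_on (Phi K I J) (fun e => UU K I J (pr K e)).
Proof. by have [_ [_ [h _]]] := ccK hI hJ p. Qed.
Lemma embphiK : embedding_on (phi K I J) (UU K I J).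
Proof. by have [_ [_ [_ [h _]]]] := ccK hI hJ p. Qed.
Lemma prPhiK e : UU K I J (pr K e) -> pr K (Phi K I J e) = phi K I J (pr K e).
Proof. by have [_ [_ [_ [_ [h _]]]]] := ccK hI hJ p; apply: h. Qed.
Lemma zrPhiK x : UU K I J x -> zr K (phi K I J x) = Phi K I J (zr K x).
Proof. by have [_ [_ [_ [_ [_ [h _]]]]]] := ccK hI hJ p; apply: h. Qed.
Lemma scPhiK x : UU K I J x -> sc K (phi K I J x) = Phi K I J (sc K x).
Proof. by have [_ [_ [_ [_ [_ [_ [h _]]]]]]] := ccK hI hJ p; apply: h. Qed.
Lemma ZphiK x : UU K I J x -> Z x -> Z (phi K I J x) /\ psi K (phi K I J x) = psi K x.
Proof. by have [_ [_ [_ [_ [_ [_ [_ h]]]]]]] := ccK hI hJ p; apply: h. Qed.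
Lemma Phi_inj e e' : UU K I J (pr K e) -> UU K I J (pr K e') ->
  Phi K I J e = Phi K I J e' -> e = e'.
Proof. exact: (emb_inj embPhiK). Qed.
Lemma phi_inj x x' : UU K I J x -> UU K I J x' -> phi K I J x = phi K I J x' -> x = x'.
Proof. exact: (emb_inj embphiK). Qed.
End CC.

Lemma IK_sub (I J : {set 'I_N}) : IK K J -> I \subset J -> I != set0 -> IK K I.
Proof.
move=> [_ [x hx]] s ne; split=> //; exists x => i iI; apply: hx; exact: (subsetP s).
Qed.

Definition ZK L (x : U K L) := @Z X N K L x.
Definition fK L (x : U K L) := psi K x.
Definition Kspi := @spi N (IK K) (U K) (UU K) (phi K).
Definition Kmk L (hL : IK K L) (x : U K L) := @mk N (IK K) (U K) L hL x.

Lemma KHPne L : IK K L -> L != set0.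
Proof. by case. Qed.

Lemma KimgC L L' (hL : IK K L) (hL' : IK K L') (p : L \proper L') (y : U K L') :
  (exists x, UU K L L' x /\ phi K L L' x = y) <-> EF K L L' (sc K y).
Proof.
have := t2K hL hL' hL' p (subxx L') y.
rewrite /Uext eqxx (neqF p) => h; split.
  by move=> [x [dx ex]]; apply: (h.1 _).2; exists x.
move=> ef; have [x [_ [dx ex]]] := h.2 (conj (conj hL' I) ef).
by exists x.
Qed.

Lemma KHCclosed L L' : IK K L -> IK K L' -> L \proper L' ->
  closed (fun y : U K L' => exists x, UU K L L' x /\ phi K L L' x = y).
Proof.
move=> hL hL' p.
apply: (closed_ext (A := fun y => EF K L L' (sc K y))).
  by move=> y; rewrite (KimgC hL hL' p).
exact: closed_preimage (cscK hL') (EFclosedK hL' (proper_sub p)).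
Qed.

Lemma KHcoc L0 L1 L2 : IK K L0 -> IK K L1 -> IK K L2 ->
  L0 \proper L1 -> L1 \proper L2 -> forall x, UU K L0 L1 x -> UU K L1 L2 (phi K L0 L1 x) ->
  UU K L0 L2 x /\ phi K L1 L2 (phi K L0 L1 x) = phi K L0 L2 x.
Proof.
move=> h0 h1 h2 p01 p12 x d01 d12.
have [c1 c2] := cocK h0 h1 h2 p01 p12.
have d02 : UU K L0 L2 x by apply: c2; split.
split=> //.
have p02 := proper_trans p01 p12.
have e0 : pr K (Phi K L0 L1 (zr K x)) = phi K L0 L1 x.
  by rewrite (prPhiK h0 h1 p01) (przrK h0).
have : Phi K L1 L2 (Phi K L0 L1 (zr K x)) = Phi K L0 L2 (zr K x).
  apply: c1; rewrite (przrK h0); split=> //; split=> //.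
move=> /(f_equal (pr K)).
rewrite (prPhiK h1 h2 p12) ?e0 // (prPhiK h0 h2 p02) (przrK h0) //.
Qed.

Lemma KHtame1 L L1 L2 : IK K L -> IK K L1 -> IK K L2 ->
  L \proper L1 -> L \proper L2 -> forall x, UU K L L1 x -> UU K L L2 x ->
  IK K (L1 :|: L2) /\ UU K L (L1 :|: L2) x.
Proof.
move=> h h1 h2 p1 p2 x d1 d2.
have pM : L \proper L1 :|: L2 := proper_sub_trans p1 (subsetUl L1 L2).
have := (t1K h h1 h2 (proper_sub p1) (proper_sub p2) x).1.
rewrite /Uext (neqF p1) (neqF p2) (neqF pM).
by move=> H; apply: H.
Qed.

Lemma KHtame2 L L1 M : IK K L -> IK K L1 -> IK K M ->
  L \proper L1 -> L1 \proper M -> forall x, UU K L L1 x -> UU K L M x ->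
  UU K L1 M (phi K L L1 x).
Proof.
move=> h h1 hM p1 p2 x d1 dM.
have := (t2K h h1 hM p1 (proper_sub p2) (phi K L L1 x)).1.
rewrite /Uext (neqF p2) (neqF (proper_trans p1 p2)) => H.
have [[_ u] _] := H (ex_intro _ x (conj (conj hM dM) (conj d1 erefl))).
exact: u.
Qed.

Lemma KHdown L L1 M : IK K L -> IK K L1 -> IK K M ->
  L \proper L1 -> L1 \proper M -> forall y a, UU K L M y -> UU K L1 M a ->
  phi K L M y = phi K L1 M a -> UU K L L1 y /\ phi K L L1 y = a.
Proof.
move=> h h1 hM p1 p2 y a dy da e.
have pLM := proper_trans p1 p2.
have f1 := EFivK h hM pLM dy.
rewrite e (scPhiK h1 hM p2 da) in f1.
have prs : UU K L1 M (pr K (sc K a)) by rewrite (prscK h1).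
have ea : phi K L1 M a = pr K (Phi K L1 M (sc K a)).
  by rewrite (prPhiK h1 hM p2 prs) (prscK h1).
have [e' [de' [fe' ee']]] :=
  (EFiiK h1 hM (proper_sub p1) p2 (Phi K L1 M (sc K a))).2 (conj f1 (ex_intro _ a (conj da ea))).
have eea : e' = sc K a := Phi_inj h1 hM p2 de' prs ee'.
rewrite eea in fe'.
have := (t2K h h1 hM p1 (proper_sub p2) a).2.
rewrite /Uext (neqF p2) (neqF pLM) => H.
have [x' [[_ dx'] [d1x ex]]] := H (conj (conj hM da) fe').
have d2 : UU K L1 M (phi K L L1 x') by rewrite ex.
have [_ c] := KHcoc h h1 hM p1 p2 d1x d2.
have exy : x' = y.
  apply: (phi_inj h hM pLM dx' dy); by rewrite -c ex e.
by subst x'; split.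
Qed.

Lemma KEFint L0 L1 L : IK K L0 -> IK K L1 -> IK K L -> L0 \proper L -> L1 \proper L ->
  forall g : E K L, EF K L0 L g -> EF K L1 L g ->
  (L0 :&: L1 = set0 /\ exists x, g = zr K x) \/ (IK K (L0 :&: L1) /\ EF K (L0 :&: L1) L g).
Proof.
move=> h0 h1 hL p0 p1 g f0 f1.
have g2 := (EFiiiK hL (proper_sub p0) (proper_sub p1) g).1 (conj f0 f1).
have [e|ne] := eqVneq (L0 :&: L1) set0.
  by left; split=> //; rewrite e in g2; exact: ((EF0K g hL).1 g2).
by right; split=> //; exact: IK_sub h0 (subsetIl _ _) ne.
Qed.

Lemma KHZphi L L' : IK K L -> IK K L' -> L \proper L' -> forall x, UU K L L' x ->
  (ZK (phi K L L' x) <-> ZK x) /\ (ZK x -> fK (phi K L L' x) = fK x).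
Proof.
move=> hL hL' p x d; split; last by move=> zx; exact: (ZphiK hL hL' p d zx).2.
split; last by move=> zx; exact: (ZphiK hL hL' p d zx).1.
rewrite /ZK /Z (scPhiK hL hL' p d) (zrPhiK hL hL' p d) => h.
by apply: (Phi_inj hL hL' p) => //; rewrite ?(prscK hL) ?(przrK hL).
Qed.

Lemma KHoverlap L0 L1 L : IK K L0 -> IK K L1 -> IK K L ->
  L0 \proper L -> L1 \proper L -> forall x0 x1, UU K L0 L x0 -> UU K L1 L x1 ->
  phi K L0 L x0 = phi K L1 L x1 ->
  (ZK x0 /\ ZK x1 /\ fK x0 = fK x1) \/
  (IK K (L0 :&: L1) /\ exists x2, UU K (L0 :&: L1) L x2 /\
      phi K (L0 :&: L1) L x2 = phi K L0 L x0).
Proof.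
move=> h0 h1 hL p0 p1 x0 x1 d0 d1 e.
have f0 := EFivK h0 hL p0 d0.
have f1 := EFivK h1 hL p1 d1; rewrite -e in f1.
case: (KEFint h0 h1 hL p0 p1 f0 f1) => [[_ [z ez]]|[h2 f2]].
  have ey : phi K L0 L x0 = z.
    by have := f_equal (pr K) ez; rewrite (prscK hL) (przrK hL).
  have zy : ZK (phi K L0 L x0) by rewrite /ZK /Z ez ey.
  have zy1 : ZK (phi K L1 L x1) by rewrite -e.
  have [hz0 hf0] := KHZphi h0 hL p0 d0.
  have [hz1 hf1] := KHZphi h1 hL p1 d1.
  have z0 : ZK x0 by apply/hz0.
  have z1 : ZK x1 by apply/hz1.
  by left; do 2 (split=> //); rewrite -hf0 // -hf1 // e.
right; split=> //.
have p2 : L0 :&: L1 \proper L := sub_proper_trans (subsetIl L0 L1) p0.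
have := (t2K h2 hL hL p2 (subxx L) (phi K L0 L x0)).2.
rewrite /Uext eqxx (neqF p2) => H.
have [x2 [_ [d2 e2]]] := H (conj (conj hL I) f2).
by exists x2.
Qed.

Lemma KHZclosed L : IK K L -> closed (@ZK L).
Proof.
move=> hL; exact: closed_eq (metrizable_hausdorff (metEK hL)) (cscK hL) (czrK hL).
Qed.

Lemma KHfcont L : IK K L -> forall G : X -> Prop, open G ->
  exists O : U K L -> Prop, open O /\ forall x, ZK x -> (O x <-> G (fK x)).
Proof. by move=> hL G oG; exact: (emb_cont (embpsiK hL) oG). Qed.

Lemma openFI L : open (FI K L).
Proof.
apply: (open_ext (A := fun y => forall i, i \in enum L -> Fp K i y)).
  by move=> y; split=> h i; [rewrite -mem_enum|rewrite mem_enum]; apply: h.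
by apply: open_fin_inter => i; exact: FopenK.
Qed.

Lemma KHfopen L : IK K L -> forall O : U K L -> Prop, open O ->
  exists G : X -> Prop, open G /\ (forall x, ZK x -> (G (fK x) <-> O x)) /\
    (forall y, G y -> exists x : U K L, ZK x /\ fK x = y).
Proof.
move=> hL O oO; have [V [oV hV]] := emb_open (embpsiK hL) oO.
exists (fun y => V y /\ FI K L y); split; first by apply: open_setI => //; exact: openFI.
split.
  move=> x zx; split; first by move=> [h _]; apply/(hV _ zx).
  move=> ox; split; first by apply/(hV _ zx).
  by apply/(FIimgK hL); exists x.
by move=> y [_ /(FIimgK hL) [x [zx ex]]]; exists x.
Qed.

Lemma KHZeq L L' (hL : IK K L) (hL' : IK K L') (a : U K L) (b : U K L') :
  ZK a -> ZK b -> fK a = fK b -> Kspi (Kmk hL a) = Kspi (Kmk hL' b).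
Proof.
move=> za zb e.
have up : forall L1 M (h1 : IK K L1) (hM : IK K M) (c : U K L1) (m : U K M),
    ZK c -> ZK m -> L1 \subset M -> psi K m = psi K c ->
    Kspi (Kmk h1 c) = Kspi (Kmk hM m).
  move=> L1 M h1 hM c m zc zm s em.
  have [eq|ne] := eqVneq L1 M.
    subst M; have -> : c = m by apply: (emb_inj (embpsiK h1)).
    by rewrite (proof_irrelevance _ hM h1).
  have p : L1 \proper M by rewrite properEneq ne s.
  have FI1 : FI K L1 (psi K c) by apply/(FIimgK h1); exists c.
  have FIM : FI K M (psi K c) by rewrite -em; apply/(FIimgK hM); exists m.
  have [dc _] := (UUZK h1 hM p c).2 (conj zc (conj FI1 FIM)).
  have [zc' ec'] := ZphiK h1 hM p dc zc.
  have emc : phi K L1 M c = m by apply: (emb_inj (embpsiK hM)) => //; rewrite ec' em.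
  rewrite /Kspi /spi; apply/qproj_eq; apply: rst_step; rewrite /Srel /Kmk /=.
  by split=> //; split=> //; rewrite emc.
set M := L :|: L'.
have FIa : FI K L (psi K a) by apply/(FIimgK hL); exists a.
have FIb : FI K L' (psi K a) by rewrite /fK in e; rewrite e; apply/(FIimgK hL'); exists b.
have FIM : FI K M (psi K a).
  by move=> i; rewrite inE => /orP [iL|iL']; [apply: FIa | apply: FIb].
have neM : M != set0.
  have [i iL] := set0Pn _ (KHPne hL).
  by apply/set0Pn; exists i; rewrite inE iL.
have hM : IK K M by split=> //; exists (psi K a).
have [m [zm em]] := (FIimgK hM _).1 FIM.
rewrite (up _ _ hL hM a m za zm (subsetUl _ _) em).
by rewrite (up _ _ hL' hM b m zb zm (subsetUr _ _)) // em.
Qed.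

Definition ZE L (e : E K L) := e = zr K (pr K e) /\ @Z X N K L (pr K e).
Definition fE L (e : E K L) := psi K (pr K e).
Definition DE L L' (e : E K L) := UU K L L' (pr K e).
Arguments DE : clear implicits.
Definition Espi := @spi N (IK K) (E K) DE (Phi K).
Definition Emk L (hL : IK K L) (e : E K L) := @mk N (IK K) (E K) L hL e.

Lemma EHDopen L L' : IK K L -> IK K L' -> L \proper L' -> open (DE L L').
Proof. by move=> hL hL' p; exact: (cprK hL) (UUoK hL hL' p). Qed.

Lemma EHemb L L' : IK K L -> IK K L' -> L \proper L' -> embedding_on (Phi K L L') (DE L L').
Proof. exact: embPhiK. Qed.

Lemma EHCclosed L L' : IK K L -> IK K L' -> L \proper L' ->
  closed (fun g : E K L' => exists e, DE L L' e /\ Phi K L L' e = g).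
Proof.
move=> hL hL' p.
apply: (closed_ext (A := fun g => EF K L L' g /\ EF K L L' (sc K (pr K g)))).
  move=> g; have h := EFiiK hL hL' (subxx L) p g.
  rewrite -(KimgC hL hL' p (pr K g)); split.
    by move=> /h [e [d [_ ee]]]; exists e.
  by move=> [e [d ee]]; apply/h; exists e; split=> //; split=> //; exact: EFJJK.
apply: closed_setI; first exact: (EFclosedK hL' (proper_sub p)).
apply: closed_preimage (EFclosedK hL' (proper_sub p)).
exact: cont_comp (cprK hL') (cscK hL').
Qed.

Lemma EHcoc L0 L1 L2 : IK K L0 -> IK K L1 -> IK K L2 ->
  L0 \proper L1 -> L1 \proper L2 -> forall e, DE L0 L1 e -> DE L1 L2 (Phi K L0 L1 e) ->
  DE L0 L2 e /\ Phi K L1 L2 (Phi K L0 L1 e) = Phi K L0 L2 e.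
Proof.
move=> h0 h1 h2 p01 p12 e d01 d12.
rewrite /DE (prPhiK h0 h1 p01 d01) in d12.
have [d02 _] := KHcoc h0 h1 h2 p01 p12 d01 d12.
split=> //; have [c1 _] := cocK h0 h1 h2 p01 p12.
by apply: c1; split.
Qed.

Lemma EHtame1 L L1 L2 : IK K L -> IK K L1 -> IK K L2 ->
  L \proper L1 -> L \proper L2 -> forall e, DE L L1 e -> DE L L2 e ->
  IK K (L1 :|: L2) /\ DE L (L1 :|: L2) e.
Proof. by move=> h h1 h2 p1 p2 e; exact: KHtame1. Qed.

Lemma EHtame2 L L1 M : IK K L -> IK K L1 -> IK K M ->
  L \proper L1 -> L1 \proper M -> forall e, DE L L1 e -> DE L M e ->
  DE L1 M (Phi K L L1 e).
Proof.
move=> h h1 hM p1 p2 e d1 dM; rewrite /DE (prPhiK h h1 p1 d1).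
exact: KHtame2.
Qed.

Lemma EHdown L L1 M : IK K L -> IK K L1 -> IK K M ->
  L \proper L1 -> L1 \proper M -> forall y a, DE L M y -> DE L1 M a ->
  Phi K L M y = Phi K L1 M a -> DE L L1 y /\ Phi K L L1 y = a.
Proof.
move=> h h1 hM p1 p2 y a dy da e.
have pLM := proper_trans p1 p2.
have e' : phi K L M (pr K y) = phi K L1 M (pr K a).
  by rewrite -(prPhiK h hM pLM dy) -(prPhiK h1 hM p2 da) e.
have [d1 ep] := KHdown h h1 hM p1 p2 dy da e'.
split=> //.
have dP : DE L1 M (Phi K L L1 y) by rewrite /DE (prPhiK h h1 p1 d1) ep.
apply: (Phi_inj h1 hM p2) => //.
have [_ c] := EHcoc h h1 hM p1 p2 d1 dP.
by rewrite c.
Qed.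

Lemma EZside L0 L (h0 : IK K L0) (hL : IK K L) (p0 : L0 \proper L) (e0 : E K L0) :
  DE L0 L e0 -> ZK (pr K (Phi K L0 L e0)) -> (exists z, Phi K L0 L e0 = zr K z) -> ZE e0.
Proof.
move=> d0 zg [z ez].
have pg : pr K (Phi K L0 L e0) = phi K L0 L (pr K e0) := prPhiK h0 hL p0 d0.
have ez' : z = phi K L0 L (pr K e0).
  by have := f_equal (pr K) ez; rewrite (przrK hL) pg.
split; last by apply/((KHZphi h0 hL p0 d0).1); rewrite -pg.
apply: (Phi_inj h0 hL p0) => //; first by rewrite /DE (przrK h0).
by rewrite ez ez' (zrPhiK h0 hL p0 d0).
Qed.

Lemma EHoverlap L0 L1 L : IK K L0 -> IK K L1 -> IK K L ->
  L0 \proper L -> L1 \proper L -> forall e0 e1, DE L0 L e0 -> DE L1 L e1 ->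
  Phi K L0 L e0 = Phi K L1 L e1 ->
  (ZE e0 /\ ZE e1 /\ fE e0 = fE e1) \/
  (IK K (L0 :&: L1) /\ exists e2, DE (L0 :&: L1) L e2 /\ Phi K (L0 :&: L1) L e2 = Phi K L0 L e0).
Proof.
move=> h0 h1 hL p0 p1 e0 e1 d0 d1 ee.
rewrite /DE in d0 d1.
set g := Phi K L0 L e0.
have fg0 : EF K L0 L g.
  by have [] := (EFiiK h0 hL (subxx L0) p0 g).1 (ex_intro _ e0 (conj d0 (conj (EFJJK e0 h0) erefl))).
have fg1 : EF K L1 L g.
  rewrite /g ee.
  by have [] := (EFiiK h1 hL (subxx L1) p1 _).1 (ex_intro _ e1 (conj d1 (conj (EFJJK e1 h1) erefl))).
have pg0 : pr K g = phi K L0 L (pr K e0) := prPhiK h0 hL p0 d0.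
have pg1 : pr K g = phi K L1 L (pr K e1).
  rewrite /g ee; exact: (prPhiK h1 hL p1 d1).
have s0 : EF K L0 L (sc K (pr K g)).
  by rewrite pg0; exact: (EFivK h0 hL p0 d0).
have s1 : EF K L1 L (sc K (pr K g)).
  by rewrite pg1; exact: (EFivK h1 hL p1 d1).
case: (KEFint h0 h1 hL p0 p1 fg0 fg1) => [[e2 gz]|[h2 f2]].
  have := (EFiiiK hL (proper_sub p0) (proper_sub p1) (sc K (pr K g))).1 (conj s0 s1).
  rewrite e2 => /(EF0K _ hL) [w ew].
  have epw : pr K g = w by have := f_equal (pr K) ew; rewrite (prscK hL) (przrK hL).
  have zpg : ZK (pr K g) by rewrite /ZK /Z ew -epw.
  have z0 : ZE e0 := EZside h0 hL p0 d0 zpg gz.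
  have z1 : ZE e1.
    apply: (EZside h1 hL p1 d1); rewrite -ee //.
  left; do 2 (split=> //).
  have q0 : psi K (phi K L0 L (pr K e0)) = psi K (pr K e0) := (KHZphi h0 hL p0 d0).2 z0.2.
  have q1 : psi K (phi K L1 L (pr K e1)) = psi K (pr K e1) := (KHZphi h1 hL p1 d1).2 z1.2.
  by rewrite /fE -q0 -q1 -pg0 -pg1.
right; split=> //.
have p2 : L0 :&: L1 \proper L := sub_proper_trans (subsetIl L0 L1) p0.
have s2 := (EFiiiK hL (proper_sub p0) (proper_sub p1) (sc K (pr K g))).1 (conj s0 s1).
have [x [dx ex]] := (KimgC h2 hL p2 (pr K g)).2 s2.
have [e [de [_ eg]]] := (EFiiK h2 hL (subxx _) p2 g).2 (conj f2 (ex_intro _ x (conj dx ex))).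
by exists e.
Qed.

Lemma EHZclosed L : IK K L -> closed (@ZE L).
Proof.
move=> hL; apply: closed_setI.
  apply: closed_eq (metrizable_hausdorff (metEK hL)) (@cont_id _) _.
  exact: cont_comp (cprK hL) (czrK hL).
exact: closed_preimage (cprK hL) (KHZclosed hL).
Qed.

Lemma EHfcont L : IK K L -> forall G : X -> Prop, open G ->
  exists O : E K L -> Prop, open O /\ forall e, ZE e -> (O e <-> G (fE e)).
Proof.
move=> hL G oG; have [O [oO hO]] := KHfcont hL oG.
exists (fun e => O (pr K e)); split; first exact: (cprK hL).
by move=> e [_ ze]; exact: hO _ ze.
Qed.

Lemma EHZphi L L' : IK K L -> IK K L' -> L \proper L' -> forall e, DE L L' e ->
  (ZE (Phi K L L' e) <-> ZE e) /\ (ZE e -> fE (Phi K L L' e) = fE e).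
Proof.
move=> hL hL' p e d.
have pg : pr K (Phi K L L' e) = phi K L L' (pr K e) := prPhiK hL hL' p d.
have [hz hf] := KHZphi hL hL' p d.
split; last by move=> [_ ze]; rewrite /fE pg; exact: hf ze.
split.
  move=> [ez zz]; rewrite pg in zz ez.
  split; last exact: hz.1 zz.
  apply: (Phi_inj hL hL' p) => //; first by rewrite /DE (przrK hL).
  by rewrite ez (zrPhiK hL hL' p d).
move=> [ez ze]; split; rewrite pg; last exact: hz.2 ze.
by rewrite (zrPhiK hL hL' p d) -ez.
Qed.

Definition liftE (u : Sdisj (IK K) (U K)) : Sdisj (IK K) (E K) :=
  existT _ (projT1 u) (zr K (projT2 u)).

Lemma EHZeq L L' (hL : IK K L) (hL' : IK K L') (a : E K L) (b : E K L') :
  ZE a -> ZE b -> fE a = fE b -> Espi (Emk hL a) = Espi (Emk hL' b).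
Proof.
move=> za zb e.
have k := KHZeq hL hL' za.2 zb.2 e.
have g := (qproj_eq _ _ _).1 k.
have lift : forall u v, gen_equiv (Srel (UU K) (phi K)) u v ->
    gen_equiv (Srel DE (Phi K)) (liftE u) (liftE v).
  apply: clos_refl_sym_trans_ind.
  - move=> [[L1 h1] x] [[L2 h2] y]; rewrite /Srel /= => -[p [d ->]].
    apply: rst_step; rewrite /Srel /liftE /=; split=> //.
    split; first by rewrite /DE (przrK h1).
    exact: (zrPhiK h1 h2 p d).
  - by move=> x; exact: rst_refl.
  - by move=> x y _ h; exact: rst_sym.
  - by move=> x y z _ h1 _ h2; exact: rst_trans h1 h2.
have ea : Emk hL a = liftE (Kmk hL (pr K a)) by rewrite /Emk /Kmk /liftE /= -za.1.
have eb : Emk hL' b = liftE (Kmk hL' (pr K b)) by rewrite /Emk /Kmk /liftE /= -zb.1.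
rewrite /Espi /spi ea eb; apply/qproj_eq; exact: lift.
Qed.

Lemma EHfopen L : IK K L -> forall O : E K L -> Prop, open O ->
  exists G : X -> Prop, open G /\ (forall e, ZE e -> (G (fE e) <-> O e)) /\
    (forall y, G y -> exists e : E K L, ZE e /\ fE e = y).
Proof.
move=> hL O oO.
have [G [oG [hG1 hG2]]] := KHfopen hL (czrK hL oO).
exists G; split=> //; split.
  move=> e [ez zz]; have := hG1 _ zz; by rewrite -ez.
move=> y gy; have [x [zx ex]] := hG2 y gy.
exists (zr K x); split; last by rewrite /fE (przrK hL).
by split; rewrite (przrK hL).
Qed.

End Inst.

Theorem mainTheorem7 (X : Top) (N : nat) (K : KData X N) :
  compact_space X -> metrizable X -> tame_top_atlas K ->
  hausdorff (Kquot K) /\ hausdorff (Equot K) /\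
  (forall (I : {set 'I_N}) (hI : IK K I),
     @embedding (U K I) (Kquot K)
       (fun x => pi_K (existT _ (exist _ I hI) x)) /\
     @embedding (E K I) (Equot K)
       (fun e => pi_E (existT _ (exist _ I hI) e))).
Proof.
move=> _ hX hK.
have HYX := metrizable_hausdorff hX.
split.
  exact: (@abs_hausdorff N (IK K) (U K) (UU K) (phi K) (@ZK X N K) X (@fK X N K)
    (@KHPne X N K) (@metUK _ _ _ hK) (@embphiK _ _ _ hK) (@KHCclosed _ _ _ hK)
    (@KHcoc _ _ _ hK) (@KHtame1 _ _ _ hK) (@KHtame2 _ _ _ hK) (@KHdown _ _ _ hK)
    (@KHoverlap _ _ _ hK) (@KHZclosed _ _ _ hK) (@KHfcont _ _ _ hK) (@KHZphi _ _ _ hK)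
    (@KHZeq _ _ _ hK) HYX).
split.
  exact: (@abs_hausdorff N (IK K) (E K) (@DE X N K) (Phi K) (@ZE X N K) X (@fE X N K)
    (@KHPne X N K) (@metEK _ _ _ hK) (@EHemb _ _ _ hK) (@EHCclosed _ _ _ hK)
    (@EHcoc _ _ _ hK) (@EHtame1 _ _ _ hK) (@EHtame2 _ _ _ hK) (@EHdown _ _ _ hK)
    (@EHoverlap _ _ _ hK) (@EHZclosed _ _ _ hK) (@EHfcont _ _ _ hK) (@EHZphi _ _ _ hK)
    (@EHZeq _ _ _ hK) HYX).
move=> I hI; split.
  exact: (@abs_embedding N (IK K) (U K) (UU K) (phi K) (@ZK X N K) X (@fK X N K)
    (@KHPne X N K) (@metUK _ _ _ hK) (@UUoK _ _ _ hK) (@embphiK _ _ _ hK) (@KHCclosed _ _ _ hK)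
    (@KHcoc _ _ _ hK) (@KHtame1 _ _ _ hK) (@KHtame2 _ _ _ hK) (@KHdown _ _ _ hK)
    (@KHoverlap _ _ _ hK) (@KHZclosed _ _ _ hK) (@KHfcont _ _ _ hK) (@KHZphi _ _ _ hK)
    (@KHZeq _ _ _ hK) (@KHfopen _ _ _ hK) I hI).
exact: (@abs_embedding N (IK K) (E K) (@DE X N K) (Phi K) (@ZE X N K) X (@fE X N K)
    (@KHPne X N K) (@metEK _ _ _ hK) (@EHDopen _ _ _ hK) (@EHemb _ _ _ hK) (@EHCclosed _ _ _ hK)
    (@EHcoc _ _ _ hK) (@EHtame1 _ _ _ hK) (@EHtame2 _ _ _ hK) (@EHdown _ _ _ hK)
    (@EHoverlap _ _ _ hK) (@EHZclosed _ _ _ hK) (@EHfcont _ _ _ hK) (@EHZphi _ _ _ hK)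
    (@EHZeq _ _ _ hK) (@EHfopen _ _ _ hK) I hI).
Qed.
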